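(* For every Følner sequence $\Phi$ on $\mathbb{N}$ and any $f\in L^2(\mathbb{N},\Phi)$ there are a subsequence $\Psi$ of $\Phi$ and functions $f_{\mathsf{Bes}}\in\mathsf{Bes}(\mathbb{N},\Psi)$ and $f_{\mathsf{anti}}\in\mathsf{Bes}(\mathbb{N},\Psi)^\perp$ such that $f=f_{\mathsf{Bes}}+f_{\mathsf{anti}}$. Moreover, $\|f-f_{\mathsf{Bes}}\|_\Psi=\inf\{\|f-g\|_\Psi: g\in\mathsf{Bes}(\mathbb{N},\Psi)\}$, and if $f$ takes values in an interval $[a,b]$, then so does $f_{\mathsf{Bes}}$.
   Context: A Følner sequence in $\mathbb{N}$ is a sequence $\Phi\colon N\mapsto\Phi_N$ of finite non-empty subsets of $\mathbb{N}$ with $|(\Phi_N+m)\triangle\Phi_N|/|\Phi_N|\to0$ for all $m\in\mathbb{N}$. $\|f\|_\Phi=\big(\limsup_{N\to\infty}\frac{1}{|\Phi_N|}\sum_{n\in\Phi_N}|f(n)|^2\big)^{1/2}$ and $L^2(\mathbb{N},\Phi)=\{f\colon\mathbb{N}\to\mathbb{C}:\|f\|_\Phi<\infty\}$. A trigonometric polynomial is a function $n\mapsto\sum_{j=1}^J c_je^{2\pi i\theta_j n}$ with $c_j\in\mathbb{C}$, $\theta_j\in[0,1)$. $\mathsf{Bes}(\mathbb{N},\Phi)$ is the set of $f\colon\mathbb{N}\to\mathbb{C}$ such that for every $\epsilon>0$ there is a trigonometric polynomial $a$ with $\|f-a\|_\Phi<\epsilon$. $\mathsf{Bes}(\mathbb{N},\Phi)^\perp$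 is the set of $f\in L^2(\mathbb{N},\Phi)$ such that $\lim_{N\to\infty}\frac{1}{|\Phi_N|}\sum_{n\in\Phi_N}f(n)e^{2\pi i n\theta}=0$ for all $\theta\in[0,1)$. *)

(* Defs.v *)
From Stdlib Require Import Reals List Arith.
From Coquelicot Require Import Coquelicot.
Import ListNotations.
Open Scope R_scope.

(* Finite subsets of N are represented by duplicate-free lists. *)
Definition memb (x : nat) (A : list nat) : bool :=
  if in_dec Nat.eq_dec x A then true else false.

Definition shift_set (A : list nat) (m : nat) : list nat := map (fun x => (x + m)%nat) A.

Definition symdiff_card (A : list nat) (m : nat) : nat :=
  (length (filter (fun x => negb (memb x A)) (shift_set A m))
   + length (filter (fun x => negb (memb x (shift_set A m))) A))%nat.

Definition Folner (Phi : nat -> list nat) : Prop :=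
  (forall N, NoDup (Phi N)) /\ (forall N, Phi N <> []) /\
  forall m : nat,
    is_lim_seq (fun N => INR (symdiff_card (Phi N) m) / INR (length (Phi N))) 0.

Definition ravg (A : list nat) (g : nat -> R) : R :=
  fold_right Rplus 0 (map g A) / INR (length A).

Definition cavg (A : list nat) (g : nat -> C) : C :=
  Cmult (RtoC (/ INR (length A))) (fold_right Cplus (RtoC 0) (map g A)).

Definition Phinorm (Phi : nat -> list nat) (f : nat -> C) : Rbar :=
  match LimSup_seq (fun N => ravg (Phi N) (fun n => (Cmod (f n)) ^ 2)) with
  | Finite r => Finite (sqrt r)
  | p_infty => p_infty
  | m_infty => m_infty
  end.

Definition L2 (Phi : nat -> list nat) (f : nat -> C) : Prop :=
  Rbar_lt (Phinorm Phi f) p_infty.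

Definition cexp2pi (t : R) : C := (cos (2 * PI * t), sin (2 * PI * t)).

Definition trig_poly (a : nat -> C) : Prop :=
  exists cs : list (C * R),
    (forall p, In p cs -> 0 <= snd p < 1) /\
    forall n : nat,
      a n = fold_right Cplus (RtoC 0) (map (fun p => Cmult (fst p) (cexp2pi (snd p * INR n))) cs).

Definition Bes (Phi : nat -> list nat) (f : nat -> C) : Prop :=
  forall eps : R, 0 < eps ->
    exists a, trig_poly a /\ Rbar_lt (Phinorm Phi (fun n => Cminus (f n) (a n))) (Finite eps).

Definition Bes_perp (Phi : nat -> list nat) (f : nat -> C) : Prop :=
  L2 Phi f /\
  forall theta : R, 0 <= theta < 1 ->
    is_lim_seq (fun N => Cmod (cavg (Phi N) (fun n => Cmult (f n) (cexp2pi (INR n * theta))))) 0.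

Definition subseq_of (Phi Psi : nat -> list nat) : Prop :=
  exists sigma : nat -> nat, (forall N, (sigma N < sigma (S N))%nat) /\
    forall N, Psi N = Phi (sigma N).

(* Main.v *)
Require Import Defs.
From Stdlib Require Import Reals List Arith Lra Lia Permutation ClassicalEpsilon Classical ZArith FunctionalExtensionality.
From Coquelicot Require Import Coquelicot.
Import ListNotations.
Open Scope R_scope.

Ltac cring := apply injective_projections; unfold Cplus, Cmult, Cminus, Copp, Cconj, RtoC; simpl; ring.

Definition n2 (z : C) : R := fst z * fst z + snd z * snd z.

Lemma n2_ge0 z : 0 <= n2 z.
Proof. unfold n2; nra. Qed.

Lemma Cmod2 z : Cmod z ^ 2 = n2 z.
Proof. unfold Cmod, n2. rewrite pow2_sqrt; [ring|]. nra. Qed.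

Lemma Cmod_n2 z : Cmod z = sqrt (n2 z).
Proof. unfold Cmod, n2. f_equal; ring. Qed.

Lemma n2_mult a b : n2 (a * b)%C = n2 a * n2 b.
Proof. unfold n2, Cmult; simpl; ring. Qed.

Lemma n2_plus_le a b : n2 (a + b)%C <= 2 * n2 a + 2 * n2 b.
Proof. unfold n2, Cplus; simpl. pose proof (pow2_ge_0 (fst a - fst b)); pose proof (pow2_ge_0 (snd a - snd b)). nra. Qed.

Lemma n2_minus_le a b : n2 (a - b)%C <= 2 * n2 a + 2 * n2 b.
Proof. unfold n2, Cminus, Cplus, Copp; simpl. pose proof (pow2_ge_0 (fst a + fst b)); pose proof (pow2_ge_0 (snd a + snd b)). nra. Qed.

Definition rs (A : list nat) (u : nat -> R) : R := fold_right Rplus 0 (map u A).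
Definition csum (A : list nat) (g : nat -> C) : C := fold_right Cplus (RtoC 0) (map g A).

Lemma ravg_rs A u : ravg A u = rs A u / INR (length A).
Proof. reflexivity. Qed.

Lemma csum_fst A g : fst (csum A g) = rs A (fun n => fst (g n)).
Proof. induction A; simpl; auto. unfold csum in *; simpl. rewrite IHA. reflexivity. Qed.
Lemma csum_snd A g : snd (csum A g) = rs A (fun n => snd (g n)).
Proof. induction A; simpl; auto. unfold csum in *; simpl. rewrite IHA. reflexivity. Qed.

Lemma rs_ext A u v : (forall n, In n A -> u n = v n) -> rs A u = rs A v.
Proof. unfold rs; induction A; simpl; intros; auto. rewrite H by auto. rewrite IHA; auto. Qed.

Lemma rs_le A u v : (forall n, In n A -> u n <= v n) -> rs A u <= rs A v.
Proof. unfold rs; induction A; simpl; intros; [lra|].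
  pose proof (H a (or_introl eq_refl)). assert (fold_right Rplus 0 (map u A) <= fold_right Rplus 0 (map v A)) by auto. lra. Qed.

Lemma rs_plus A u v : rs A (fun n => u n + v n) = rs A u + rs A v.
Proof. induction A; unfold rs in *; simpl; [ring|]. rewrite IHA; ring. Qed.

Lemma rs_scal A c u : rs A (fun n => c * u n) = c * rs A u.
Proof. induction A; unfold rs in *; simpl; [ring|]. rewrite IHA; ring. Qed.

Lemma rs_const A c : rs A (fun _ => c) = INR (length A) * c.
Proof. induction A; unfold rs in *; [simpl; ring|]. simpl fold_right. rewrite IHA. change (length (a :: A)) with (S (length A)). rewrite S_INR. ring. Qed.

Lemma rs_nonneg A u : (forall n, In n A -> 0 <= u n) -> 0 <= rs A u.
Proof. intros. replace 0 with (rs A (fun _ => 0)). apply rs_le; auto. rewrite rs_const; ring. Qed.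

Lemma ravg_ext A u v : (forall n, In n A -> u n = v n) -> ravg A u = ravg A v.
Proof. intros; rewrite !ravg_rs, (rs_ext A u v); auto. Qed.

Lemma ravg_le A u v : (forall n, In n A -> u n <= v n) -> ravg A u <= ravg A v.
Proof. intros; rewrite !ravg_rs. unfold Rdiv. apply Rmult_le_compat_r.
  destruct (length A) eqn:E. simpl. rewrite Rinv_0; lra. left; apply Rinv_0_lt_compat, lt_0_INR; lia.
  apply rs_le; auto. Qed.

Lemma ravg_plus A u v : ravg A (fun n => u n + v n) = ravg A u + ravg A v.
Proof. rewrite !ravg_rs, rs_plus. unfold Rdiv; ring. Qed.
Lemma ravg_scal A c u : ravg A (fun n => c * u n) = c * ravg A u.
Proof. rewrite !ravg_rs, rs_scal. unfold Rdiv; ring. Qed.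
Lemma ravg_const A c : A <> [] -> ravg A (fun _ => c) = c.
Proof. intros. rewrite ravg_rs, rs_const. destruct A; [congruence|]. simpl length.
  field. apply not_0_INR; lia. Qed.
Lemma ravg_nonneg A u : (forall n, In n A -> 0 <= u n) -> 0 <= ravg A u.
Proof. intros. replace 0 with (ravg A (fun _ => 0)). apply ravg_le; auto.
  rewrite ravg_rs, rs_const. unfold Rdiv; ring. Qed.

Lemma jensen A u : (ravg A u) ^ 2 <= ravg A (fun n => u n ^ 2).
Proof.
  destruct (length A) eqn:E.
  { rewrite !ravg_rs, E. simpl INR. unfold Rdiv. rewrite Rinv_0. lra. }
  set (m := ravg A u).
  assert (Hn : INR (length A) > 0) by (apply lt_0_INR; lia).
  assert (H0 : 0 <= rs A (fun n => (u n - m) ^ 2)) by (apply rs_nonneg; intros; apply pow2_ge_0).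
  assert (Hx : rs A (fun n => (u n - m) ^ 2) = rs A (fun n => u n ^ 2) + (-2 * m) * rs A u + INR (length A) * m ^ 2).
  { rewrite <- rs_scal, <- rs_const, <- !rs_plus. apply rs_ext; intros; ring. }
  assert (Hm : rs A u = INR (length A) * m) by (unfold m; rewrite ravg_rs; field; lra).
  rewrite ravg_rs. rewrite Hm in Hx. apply (Rmult_le_reg_r (INR (length A))); [lra|].
  unfold Rdiv. rewrite Rmult_assoc, Rinv_l by lra. nra.
Qed.

Lemma cavg_fst A g : fst (cavg A g) = ravg A (fun n => fst (g n)).
Proof. unfold cavg. fold (csum A g). unfold Cmult, RtoC; simpl. rewrite csum_fst, csum_snd, ravg_rs. unfold Rdiv. ring. Qed.
Lemma cavg_snd A g : snd (cavg A g) = ravg A (fun n => snd (g n)).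
Proof. unfold cavg. fold (csum A g). unfold Cmult, RtoC; simpl. rewrite csum_fst, csum_snd, ravg_rs. unfold Rdiv. ring. Qed.

Lemma cjensen A g : n2 (cavg A g) <= ravg A (fun n => n2 (g n)).
Proof.
  unfold n2 at 1. rewrite cavg_fst, cavg_snd.
  pose proof (jensen A (fun n => fst (g n))). pose proof (jensen A (fun n => snd (g n))).
  replace (ravg A (fun n => n2 (g n))) with (ravg A (fun n => fst (g n) ^ 2) + ravg A (fun n => snd (g n) ^ 2)).
  nra. rewrite <- ravg_plus. apply ravg_ext; intros; unfold n2; ring.
Qed.

Lemma cavg_ext A g h : (forall n, In n A -> g n = h n) -> cavg A g = cavg A h.
Proof. intros. apply injective_projections; rewrite ?cavg_fst, ?cavg_snd; apply ravg_ext; intros; rewrite H; auto. Qed.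

Lemma csum_plus A g h : csum A (fun n => g n + h n)%C = (csum A g + csum A h)%C.
Proof. unfold csum; induction A; simpl; [cring|]. rewrite IHA. cring. Qed.
Lemma csum_minus A g h : csum A (fun n => g n - h n)%C = (csum A g - csum A h)%C.
Proof. unfold csum; induction A; simpl; [cring|]. rewrite IHA. cring. Qed.
Lemma csum_scal A c g : csum A (fun n => c * g n)%C = (c * csum A g)%C.
Proof. unfold csum; induction A; simpl; [cring|]. rewrite IHA. cring. Qed.
Lemma cavg_plus A g h : cavg A (fun n => g n + h n)%C = (cavg A g + cavg A h)%C.
Proof. unfold cavg. fold (csum A (fun n => g n + h n)%C) (csum A g) (csum A h). rewrite csum_plus. cring. Qed.
Lemma cavg_minus A g h : cavg A (fun n => g n - h n)%C = (cavg A g - cavg A h)%C.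
Proof. unfold cavg. fold (csum A (fun n => g n - h n)%C) (csum A g) (csum A h). rewrite csum_minus. cring. Qed.
Lemma cavg_scal A c g : cavg A (fun n => c * g n)%C = (c * cavg A g)%C.
Proof. unfold cavg. fold (csum A (fun n => c * g n)%C) (csum A g). rewrite csum_scal. cring. Qed.
Lemma cavg_const A c : A <> [] -> cavg A (fun _ => c) = c.
Proof. intros. apply injective_projections; rewrite ?cavg_fst, ?cavg_snd; apply ravg_const; auto. Qed.

Definition ev (P : nat -> Prop) := exists N, forall n, (N <= n)%nat -> P n.
Definition freq (P : nat -> Prop) := forall N, exists n, (N <= n)%nat /\ P n.
Definition StrictInc (s : nat -> nat) := forall n, (s n < s (S n))%nat.
Definition TS (Psi Psi' : nat -> list nat) :=
  exists k, forall N, (k <= N)%nat -> exists m, (N <= m)%nat /\ Psi' N = Psi m.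

Lemma ev_and P Q : ev P -> ev Q -> ev (fun n => P n /\ Q n).
Proof. intros [N1 H1] [N2 H2]; exists (max N1 N2); intros; split; [apply H1|apply H2]; lia. Qed.
Lemma ev_mono (P Q : nat -> Prop) : (forall n, P n -> Q n) -> ev P -> ev Q.
Proof. intros H [N H1]; exists N; auto. Qed.
Lemma ev_freq P Q : ev P -> freq Q -> freq (fun n => P n /\ Q n).
Proof. intros [N1 H1] H2 N. destruct (H2 (max N N1)) as [n [Hn Hq]]. exists n; split; [lia|]. split; auto. apply H1; lia. Qed.
Lemma ev_ge (P : nat -> Prop) k : ev P -> ev (fun n => (k <= n)%nat /\ P n).
Proof. intros [N H]; exists (max N k); intros; split; [lia|]; apply H; lia. Qed.

Lemma si_ge s : StrictInc s -> forall n, (n <= s n)%nat.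
Proof. intros H n; induction n; [lia|]. specialize (H n); lia. Qed.
Lemma si_mono s : StrictInc s -> forall m n, (m < n)%nat -> (s m < s n)%nat.
Proof. intros H m n Hmn. induction n; [lia|]. destruct (Nat.eq_dec m n); subst; [apply H|].
  specialize (H n). assert (s m < s n)%nat by (apply IHn; lia). lia. Qed.
Lemma si_mono_le s : StrictInc s -> forall m n, (m <= n)%nat -> (s m <= s n)%nat.
Proof. intros H m n Hmn. destruct (Nat.eq_dec m n); subst; [lia|]. pose proof (si_mono s H m n); lia. Qed.
Lemma si_comp s t : StrictInc s -> StrictInc t -> StrictInc (fun n => s (t n)).
Proof. intros Hs Ht n. apply si_mono; auto. Qed.

Lemma TS_refl Psi : TS Psi Psi.
Proof. exists 0%nat; intros; exists N; split; auto. Qed.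
Lemma TS_sub Psi s : StrictInc s -> TS Psi (fun N => Psi (s N)).
Proof. intros H; exists 0%nat; intros; exists (s N); split; auto. apply si_ge; auto. Qed.
Lemma TS_trans A B C : TS A B -> TS B C -> TS A C.
Proof. intros [k1 H1] [k2 H2]. exists (max k1 k2); intros N HN.
  destruct (H2 N) as [m [Hm Em]]; [lia|]. destruct (H1 m) as [m' [Hm' Em']]; [lia|].
  exists m'; split; [lia|]. congruence. Qed.

Lemma TS_ev Psi Psi' (P : list nat -> Prop) : TS Psi Psi' -> ev (fun N => P (Psi N)) -> ev (fun N => P (Psi' N)).
Proof. intros [k H] [N HN]. exists (max k N); intros n Hn. destruct (H n) as [m [Hm Em]]; [lia|].
  rewrite Em. apply HN; lia. Qed.
Lemma TS_freq Psi Psi' (P : list nat -> Prop) : TS Psi Psi' -> freq (fun N => P (Psi' N)) -> freq (fun N => P (Psi N)).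
Proof. intros [k H] HF N. destruct (HF (max k N)) as [n [Hn Pn]]. destruct (H n) as [m [Hm Em]]; [lia|].
  exists m; split; [lia|]. congruence. Qed.

Lemma lim_ev (u : nat -> R) l : is_lim_seq u (Finite l) <-> forall eps, 0 < eps -> ev (fun n => Rabs (u n - l) < eps).
Proof. rewrite <- is_lim_seq_spec. split; intros H.
  - intros eps Heps. destruct (H (mkposreal eps Heps)) as [N HN]. exists N; auto.
  - intros eps. destruct (H eps (cond_pos eps)) as [N HN]. exists N; auto. Qed.

Lemma TS_lim Psi Psi' (G : list nat -> R) l : TS Psi Psi' -> is_lim_seq (fun N => G (Psi N)) (Finite l) -> is_lim_seq (fun N => G (Psi' N)) (Finite l).
Proof. rewrite !lim_ev. intros HT H eps Heps. apply (TS_ev Psi Psi' (fun A => Rabs (G A - l) < eps)); auto. Qed.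

Lemma lim0_le (v w : nat -> R) : (forall n, 0 <= v n) -> ev (fun n => v n <= w n) -> is_lim_seq w 0 -> is_lim_seq v 0.
Proof. rewrite !lim_ev. intros H0 [N HN] Hw eps Heps. destruct (Hw eps Heps) as [M HM]. exists (max N M); intros.
  specialize (HN n ltac:(lia)); specialize (HM n ltac:(lia)); specialize (H0 n). rewrite Rminus_0_r in *.
  rewrite Rabs_pos_eq in * by lra. lra. Qed.

Lemma lim0_plus (v w : nat -> R) : is_lim_seq v 0 -> is_lim_seq w 0 -> is_lim_seq (fun n => v n + w n) 0.
Proof. intros. replace (Finite 0) with (Rbar_plus 0 0) by (simpl; f_equal; ring). apply is_lim_seq_plus'; auto. Qed.
Lemma lim0_scal (v : nat -> R) c : is_lim_seq v 0 -> is_lim_seq (fun n => c * v n) 0.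
Proof. intros. replace (Finite 0) with (Rbar_mult c 0) by (simpl; f_equal; ring). apply is_lim_seq_scal_l; auto. Qed.

Lemma inv_small eps : 0 < eps -> exists K, forall k, (K <= k)%nat -> 1 / (INR k + 1) < eps.
Proof. intros. destruct (archimed (1/eps)) as [H1 _].
  assert (0 <= IZR (up (1/eps))). { assert (0 < 1/eps) by (apply Rdiv_lt_0_compat; lra). lra. }
  exists (Z.to_nat (up (1/eps))). intros k Hk. apply le_INR in Hk. rewrite INR_IZR_INZ, Z2Nat.id in Hk.
  2:{ apply le_IZR; auto. }
  assert (0 < INR k + 1) by (pose proof (pos_INR k); lra).
  apply (Rmult_lt_reg_r (INR k + 1)); auto. unfold Rdiv. rewrite Rmult_1_l, Rinv_l by lra.
  assert (1/eps * eps = 1) by (field; lra).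
  assert (1 / eps < INR k + 1) by lra. 
  apply (Rmult_lt_compat_r eps) in H4; auto. lra. Qed.

Lemma extract (P : nat -> nat -> Prop) : (forall k m, exists n, (m <= n)%nat /\ P k n) ->
  exists s, StrictInc s /\ forall k, P k (s k).
Proof. intros H.
  assert (F : forall k m, {n | (m <= n)%nat /\ P k n}) by (intros; apply constructive_indefinite_description; auto).
  set (s := fix s k := match k with O => proj1_sig (F O O) | S k' => proj1_sig (F k (S (s k'))) end).
  exists s. split.
  - intros n. simpl. destruct (F (S n) (S (s n))); simpl. lia.
  - intros [|k]; simpl. exact (proj2 (proj2_sig (F O O))). exact (proj2 (proj2_sig (F (S k) _))). Qed.

Lemma LimSup_correct u : is_LimSup_seq u (LimSup_seq u).
Proof. destruct (ex_LimSup_seq u) as [l H]. rewrite (is_LimSup_seq_unique _ _ H). auto. Qed.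

Lemma extract_limsup (u : nat -> R) l : LimSup_seq u = Finite l -> exists s, StrictInc s /\ is_lim_seq (fun k => u (s k)) l.
Proof. intros E. pose proof (LimSup_correct u) as H. rewrite E in H.
  destruct (extract (fun k n => Rabs (u n - l) < 1 / (INR k + 1))) as [s [Hs Hp]].
  { intros k m. assert (Hp : 0 < 1 / (INR k + 1)) by (apply Rdiv_lt_0_compat; [lra|pose proof (pos_INR k); lra]).
    destruct (H (mkposreal _ Hp)) as [H1 [N H2]]. simpl in *.
    destruct (H1 (max m N)) as [n [Hn Hu]]. exists n; split; [lia|]. specialize (H2 n ltac:(lia)).
    apply Rabs_def1; lra. }
  exists s; split; auto. apply lim_ev. intros eps Heps. destruct (inv_small eps Heps) as [K HK].
  exists K; intros k Hk. specialize (Hp k); specialize (HK k Hk). lra. Qed.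

Lemma abs_le_both x M : Rabs x <= M -> -M <= x <= M.
Proof. unfold Rabs; destruct Rcase_abs; lra. Qed.

Lemma LimSup_bounded (u : nat -> R) M : ev (fun n => Rabs (u n) <= M) -> exists l, LimSup_seq u = Finite l.
Proof. intros [N HN]. pose proof (LimSup_correct u) as H. destruct (LimSup_seq u) as [l| |] eqn:E.
  - exists l; auto.
  - exfalso. destruct (H M N) as [n [Hn Hu]]. specialize (HN n Hn). apply abs_le_both in HN. lra.
  - exfalso. destruct (H (-M - 1)) as [N' HN']. specialize (HN (max N N') ltac:(lia)).
    specialize (HN' (max N N') ltac:(lia)). apply abs_le_both in HN. lra. Qed.

Lemma extract_bounded (u : nat -> R) M : ev (fun n => Rabs (u n) <= M) -> exists s (l : R), StrictInc s /\ is_lim_seq (fun k => u (s k)) l.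
Proof. intros H. destruct (LimSup_bounded u M H) as [l E]. destruct (extract_limsup u l E) as [s [Hs Hl]]. exists s, l; auto. Qed.

Definition CL (u : nat -> C) (c : C) := is_lim_seq (fun N => Cmod (u N - c)%C) 0.

Lemma Cmod_le_comp z : Cmod z <= Rabs (fst z) + Rabs (snd z).
Proof. rewrite Cmod_n2. unfold n2. apply Rsqr_incr_0_var. 2:{ pose proof (Rabs_pos (fst z)); pose proof (Rabs_pos (snd z)); lra. }
  rewrite Rsqr_sqrt by (pose proof (n2_ge0 z); unfold n2 in *; lra). unfold Rsqr.
  pose proof (Rabs_pos (fst z)); pose proof (Rabs_pos (snd z)).
  assert (fst z * fst z = Rabs (fst z) * Rabs (fst z)) by (rewrite <- Rabs_mult; rewrite Rabs_pos_eq; nra).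
  assert (snd z * snd z = Rabs (snd z) * Rabs (snd z)) by (rewrite <- Rabs_mult; rewrite Rabs_pos_eq; nra).
  nra. Qed.

Lemma Rabs_fst_le z : Rabs (fst z) <= Cmod z.
Proof. rewrite Cmod_n2. unfold n2. rewrite <- sqrt_Rsqr_abs. apply sqrt_le_1_alt. unfold Rsqr. nra. Qed.
Lemma Rabs_snd_le z : Rabs (snd z) <= Cmod z.
Proof. rewrite Cmod_n2. unfold n2. rewrite <- sqrt_Rsqr_abs. apply sqrt_le_1_alt. unfold Rsqr. nra. Qed.

Lemma CL_comp (u : nat -> C) (c : C) : is_lim_seq (fun N => fst (u N)) (fst c) -> is_lim_seq (fun N => snd (u N)) (snd c) -> CL u c.
Proof. intros H1 H2. unfold CL. apply (lim0_le _ (fun N => Rabs (fst (u N) - fst c) + Rabs (snd (u N) - snd c))).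
  - intros; apply Cmod_ge_0.
  - exists 0%nat; intros. pose proof (Cmod_le_comp (u n - c)%C). simpl in H0. unfold Rminus. lra.
  - apply lim0_plus.
    +       replace (Finite 0) with (Rbar_abs (Rbar_minus (fst c) (fst c))) by (simpl; f_equal; rewrite Rplus_opp_r, Rabs_R0; auto).
      apply is_lim_seq_abs. apply is_lim_seq_minus'; auto. apply is_lim_seq_const.
    + replace (Finite 0) with (Rbar_abs (Rbar_minus (snd c) (snd c))) by (simpl; f_equal; rewrite Rplus_opp_r, Rabs_R0; auto).
      apply is_lim_seq_abs. apply is_lim_seq_minus'; auto. apply is_lim_seq_const. Qed.

Lemma CL_fst (u : nat -> C) (c : C) : CL u c -> is_lim_seq (fun N => fst (u N)) (fst c).
Proof. unfold CL. intros H. apply lim_ev. intros eps He. rewrite lim_ev in H. destruct (H eps He) as [N HN].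
  exists N; intros n Hn. specialize (HN n Hn). rewrite Rminus_0_r, Rabs_pos_eq in HN by apply Cmod_ge_0.
  pose proof (Rabs_fst_le (u n - c)%C). simpl in H0. unfold Rminus. lra. Qed.
Lemma CL_snd (u : nat -> C) (c : C) : CL u c -> is_lim_seq (fun N => snd (u N)) (snd c).
Proof. unfold CL. intros H. apply lim_ev. intros eps He. rewrite lim_ev in H. destruct (H eps He) as [N HN].
  exists N; intros n Hn. specialize (HN n Hn). rewrite Rminus_0_r, Rabs_pos_eq in HN by apply Cmod_ge_0.
  pose proof (Rabs_snd_le (u n - c)%C). simpl in H0. unfold Rminus. lra. Qed.

Lemma CL_plus u v a b : CL u a -> CL v b -> CL (fun N => u N + v N)%C (a + b)%C.
Proof. unfold CL. intros. apply (lim0_le _ (fun N => Cmod (u N - a) + Cmod (v N - b))).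
  intros; apply Cmod_ge_0. exists 0%nat; intros. eapply Rle_trans; [|apply Cmod_triangle]. right; f_equal; cring.
  apply lim0_plus; auto. Qed.
Lemma CL_scal u a c : CL u a -> CL (fun N => c * u N)%C (c * a)%C.
Proof. unfold CL. intros. apply (lim0_le _ (fun N => Cmod c * Cmod (u N - a))).
  intros; apply Cmod_ge_0. exists 0%nat; intros. rewrite <- Cmod_mult. right; f_equal; cring.
  apply lim0_scal; auto. Qed.
Lemma CL_minus u v a b : CL u a -> CL v b -> CL (fun N => u N - v N)%C (a - b)%C.
Proof. intros. replace (a - b)%C with (a + (-1) * b)%C by cring.
  eapply (is_lim_seq_ext _ _ _ _ (CL_plus _ _ _ _ H (CL_scal _ _ (-1) H0))). Unshelve. intros; simpl. f_equal. cring. Qed.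
Lemma CL_ext u v a : (forall N, u N = v N) -> CL u a -> CL v a.
Proof. unfold CL; intros. eapply is_lim_seq_ext; [|eauto]. intros; simpl; rewrite H; auto. Qed.
Lemma CL_ext_ev u v a : ev (fun N => u N = v N) -> CL u a -> CL v a.
Proof. unfold CL; rewrite !lim_ev; intros [K HK] H eps He. destruct (H eps He) as [N HN]. exists (max K N); intros.
  rewrite <- HK by lia. apply HN; lia. Qed.
Lemma CL_const c : CL (fun _ => c) c.
Proof. unfold CL. eapply is_lim_seq_ext; [|apply is_lim_seq_const]. intros; simpl.
  replace (c - c)%C with (RtoC 0) by cring. rewrite Cmod_0. auto. Qed.
Lemma CL_unique u a b : CL u a -> CL u b -> a = b.
Proof. intros. apply injective_projections.
  apply CL_fst in H; apply CL_fst in H0. apply is_lim_seq_unique in H; apply is_lim_seq_unique in H0. congruence.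
  apply CL_snd in H; apply CL_snd in H0. apply is_lim_seq_unique in H; apply is_lim_seq_unique in H0. congruence. Qed.
Lemma CL_sub u a s : StrictInc s -> CL u a -> CL (fun N => u (s N)) a.
Proof. unfold CL; intros. apply (is_lim_seq_subseq (fun N => Cmod (u N - a))); auto. apply eventually_subseq; auto. Qed.
Lemma TS_CL Psi Psi' (G : list nat -> C) a : TS Psi Psi' -> CL (fun N => G (Psi N)) a -> CL (fun N => G (Psi' N)) a.
Proof. unfold CL; intros. apply (TS_lim Psi Psi' (fun A => Cmod (G A - a))); auto. Qed.

Lemma extract_C (u : nat -> C) M : ev (fun n => Cmod (u n) <= M) -> exists s c, StrictInc s /\ CL (fun k => u (s k)) c.
Proof. intros H.
  destruct (extract_bounded (fun n => fst (u n)) M) as [s1 [l1 [Hs1 H1]]].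
  { eapply ev_mono; [|apply H]. intros; simpl. pose proof (Rabs_fst_le (u n)); lra. }
  destruct (extract_bounded (fun n => snd (u (s1 n))) M) as [s2 [l2 [Hs2 H2]]].
  { destruct H as [N HN]. exists N; intros. pose proof (Rabs_snd_le (u (s1 n))). pose proof (si_ge s1 Hs1 n). specialize (HN (s1 n) ltac:(lia)). lra. }
  exists (fun k => s1 (s2 k)), (l1, l2). split. apply si_comp; auto.
  apply CL_comp; simpl; auto. apply (is_lim_seq_subseq (fun n => fst (u (s1 n)))); auto. apply eventually_subseq; auto. Qed.

Lemma cexp_add a b : cexp2pi (a + b) = (cexp2pi a * cexp2pi b)%C.
Proof. unfold cexp2pi. replace (2 * PI * (a + b)) with (2 * PI * a + 2 * PI * b) by ring.
  rewrite cos_plus, sin_plus. cring. Qed.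
Lemma n2_cexp t : n2 (cexp2pi t) = 1.
Proof. unfold n2, cexp2pi; simpl. pose proof (sin2_cos2 (2 * PI * t)). unfold Rsqr in H. lra. Qed.
Lemma Cmod_cexp t : Cmod (cexp2pi t) = 1.
Proof. rewrite Cmod_n2, n2_cexp, sqrt_1; auto. Qed.
Lemma cexp_0 : cexp2pi 0 = RtoC 1.
Proof. unfold cexp2pi. rewrite Rmult_0_r, cos_0, sin_0. auto. Qed.

Lemma cos_sin_periodZ x z : cos (x + 2 * IZR z * PI) = cos x /\ sin (x + 2 * IZR z * PI) = sin x.
Proof.
  assert (Hp : forall n : nat, cos (x + 2 * INR n * PI) = cos x /\ sin (x + 2 * INR n * PI) = sin x)
    by (intros; split; [apply cos_period|apply sin_period]).
  destruct (Z_le_gt_dec 0 z).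
  - rewrite <- (Z2Nat.id z) by auto. rewrite <- INR_IZR_INZ. auto.
  - assert (z = - Z.of_nat (Z.to_nat (- z)))%Z by lia. rewrite H, opp_IZR, <- INR_IZR_INZ.
    set (n := Z.to_nat (-z)). destruct (Hp n) as [H1 H2].
    set (y := x + 2 * - INR n * PI).
    split; [rewrite <- (cos_period y n) | rewrite <- (sin_period y n)]; unfold y; f_equal; ring. Qed.

Lemma cexp_intZ t z : cexp2pi (t + IZR z) = cexp2pi t.
Proof. unfold cexp2pi. replace (2 * PI * (t + IZR z)) with (2 * PI * t + 2 * IZR z * PI) by ring.
  destruct (cos_sin_periodZ (2 * PI * t) z) as [H1 H2]. rewrite H1, H2; auto. Qed.

Lemma cexp_neq1 a : -1 < a < 1 -> a <> 0 -> cexp2pi a <> RtoC 1.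
Proof. intros Ha Hn E. unfold cexp2pi, RtoC in E. injection E as E1 E2.
  apply sin_eq_0_0 in E2. destruct E2 as [k Hk]. pose proof PI_RGT_0.
  assert (IZR k = 2 * a) by (apply (Rmult_eq_reg_r PI); [|lra]; lra).
  assert (-2 < IZR k < 2) by lra. destruct H1 as [H1 H2]. apply lt_IZR in H1, H2.
  assert (Hk3 : (k = 0 \/ k = 1 \/ k = -1)%Z) by lia. destruct Hk3 as [ -> | [ -> | -> ] ].
  - simpl in H0. lra.
  - rewrite Hk in E1. simpl in E1. rewrite Rmult_1_l, cos_PI in E1. lra.
  - rewrite Hk in E1. simpl in E1. replace (-1 * PI) with (- PI) in E1 by ring. rewrite cos_neg, cos_PI in E1. lra. Qed.

Definition F1 (Psi : nat -> list nat) : Prop :=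
  (forall N, NoDup (Psi N)) /\ (forall N, Psi N <> []) /\
  is_lim_seq (fun N => INR (symdiff_card (Psi N) 1) / INR (length (Psi N))) 0.

Lemma memb_In x A : memb x A = true <-> In x A.
Proof. unfold memb. destruct (in_dec Nat.eq_dec x A); split; intros; auto; congruence. Qed.

Lemma NoDup_shift A m : NoDup A -> NoDup (shift_set A m).
Proof. intros. unfold shift_set. apply FinFun.Injective_map_NoDup; auto. intros x y H1; lia. Qed.

Lemma csum_cons a A g : csum (a :: A) g = (g a + csum A g)%C.
Proof. reflexivity. Qed.
Lemma csum_nil g : csum [] g = RtoC 0.
Proof. reflexivity. Qed.

Lemma csum_split (p : nat -> bool) l g : csum l g = (csum (filter p l) g + csum (filter (fun x => negb (p x)) l) g)%C.
Proof. induction l; simpl; [cring|]. destruct (p a); simpl; rewrite !csum_cons, IHl; cring. Qed.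

Lemma csum_perm l l' g : Permutation l l' -> csum l g = csum l' g.
Proof. induction 1; rewrite ?csum_cons; auto. rewrite IHPermutation; auto. cring. congruence. Qed.

Lemma Cmod_csum_le l g : (forall n, In n l -> Cmod (g n) <= 1) -> Cmod (csum l g) <= INR (length l).
Proof. induction l; intros H. rewrite csum_nil, Cmod_0; simpl; lra.
  rewrite csum_cons. change (length (a :: l)) with (S (length l)). rewrite S_INR.
  eapply Rle_trans; [apply Cmod_triangle|]. pose proof (H a (or_introl eq_refl)).
  assert (Cmod (csum l g) <= INR (length l)) by (apply IHl; intros; apply H; simpl; auto). lra. Qed.

Lemma csum_shift A g : csum (shift_set A 1) g = csum A (fun n => g (n + 1)%nat).
Proof. unfold csum, shift_set. rewrite map_map. auto. Qed.

Lemma shift_diff A g : NoDup A -> (forall n, Cmod (g n) <= 1) ->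
  Cmod (csum (shift_set A 1) g - csum A g)%C <= INR (symdiff_card A 1).
Proof. intros HA Hg. set (B := shift_set A 1).
  assert (HB : NoDup B) by (apply NoDup_shift; auto).
  rewrite (csum_split (fun x => memb x A) B), (csum_split (fun x => memb x B) A).
  assert (Hp : Permutation (filter (fun x => memb x A) B) (filter (fun x => memb x B) A)).
  { apply NoDup_Permutation; try apply NoDup_filter; auto. intros x. rewrite !filter_In, !memb_In. tauto. }
  rewrite (csum_perm _ _ g Hp).
  replace (csum (filter (fun x : nat => memb x B) A) g + csum (filter (fun x : nat => negb (memb x A)) B) g -
   (csum (filter (fun x : nat => memb x B) A) g + csum (filter (fun x : nat => negb (memb x B)) A) g))%C
   with (csum (filter (fun x : nat => negb (memb x A)) B) g + (-1) * csum (filter (fun x : nat => negb (memb x B)) A) g)%C by cring.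
  eapply Rle_trans; [apply Cmod_triangle|]. rewrite Cmod_mult.
  replace (Cmod (-1)) with 1. 2:{ rewrite Cmod_n2; unfold n2; simpl. replace (-1 * -1 + 0 * 0) with 1 by ring. rewrite sqrt_1; auto. }
  unfold symdiff_card. rewrite plus_INR. fold B.
  pose proof (Cmod_csum_le (filter (fun x => negb (memb x A)) B) g ltac:(auto)).
  pose proof (Cmod_csum_le (filter (fun x => negb (memb x B)) A) g ltac:(auto)). lra. Qed.

Lemma cavg_csum A g : cavg A g = (RtoC (/ INR (length A)) * csum A g)%C.
Proof. reflexivity. Qed.

Lemma Cmod_RtoC r : 0 <= r -> Cmod (RtoC r) = r.
Proof. intros. rewrite Cmod_n2; unfold n2; simpl. replace (r * r + 0 * 0) with (r * r) by ring. apply sqrt_square; auto. Qed.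

Lemma char_bound A a : NoDup A -> A <> [] ->
  Cmod (cexp2pi a - 1)%C * Cmod (cavg A (fun n => cexp2pi (a * INR n))) <= INR (symdiff_card A 1) / INR (length A).
Proof. intros HA Hne.
  assert (Hl : 0 < INR (length A)) by (destruct A; [congruence|]; apply lt_0_INR; simpl; lia).
  pose proof (shift_diff A (fun n => cexp2pi (a * INR n)) HA (fun n => Req_le _ _ (Cmod_cexp _))) as H.
  rewrite csum_shift in H.
  assert (E : csum A (fun n => cexp2pi (a * INR (n + 1))) = (cexp2pi a * csum A (fun n => cexp2pi (a * INR n)))%C).
  { rewrite <- csum_scal. unfold csum. f_equal. apply map_ext. intros n. rewrite plus_INR. simpl INR.
    rewrite <- cexp_add. f_equal. ring. }
  rewrite E in H. rewrite cavg_csum, Cmod_mult, Cmod_RtoC by (left; apply Rinv_0_lt_compat; auto).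
  replace (cexp2pi a * csum A (fun n : nat => cexp2pi (a * INR n)) - csum A (fun n : nat => cexp2pi (a * INR n)))%C
    with ((cexp2pi a - 1) * csum A (fun n : nat => cexp2pi (a * INR n)))%C in H by cring.
  rewrite Cmod_mult in H. unfold Rdiv. 
  replace (Cmod (cexp2pi a - 1) * (/ INR (length A) * Cmod (csum A (fun n : nat => cexp2pi (a * INR n)))))
    with ((Cmod (cexp2pi a - 1) * Cmod (csum A (fun n : nat => cexp2pi (a * INR n)))) * / INR (length A)) by ring.
  apply Rmult_le_compat_r; auto. left; apply Rinv_0_lt_compat; auto. Qed.

Lemma FL_char Psi a : F1 Psi -> -1 < a < 1 -> a <> 0 ->
  is_lim_seq (fun N => Cmod (cavg (Psi N) (fun n => cexp2pi (a * INR n)))) 0.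
Proof. intros [HN [Hne Hlim]] Ha Ha0.
  assert (Hc : 0 < Cmod (cexp2pi a - 1)%C).
  { destruct (Cmod_ge_0 (cexp2pi a - 1)%C); auto. symmetry in H. apply Cmod_eq_0 in H.
    exfalso; apply (cexp_neq1 a Ha Ha0). replace (cexp2pi a) with ((cexp2pi a - 1) + 1)%C by cring. rewrite H. cring. }
  apply (lim0_le _ (fun N => / Cmod (cexp2pi a - 1)%C * (INR (symdiff_card (Psi N) 1) / INR (length (Psi N))))).
  - intros; apply Cmod_ge_0.
  - exists 0%nat; intros. pose proof (char_bound (Psi n) a (HN n) (Hne n)).
    apply (Rmult_le_reg_l (Cmod (cexp2pi a - 1)%C)); auto. rewrite <- Rmult_assoc, Rinv_r by lra. lra.
  - apply lim0_scal. apply Hlim. Qed.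

Lemma max_in A : A <> [] -> In (fold_right max 0%nat A) A.
Proof. induction A; intros; [congruence|]. simpl. destruct A. simpl; left; lia.
  destruct (Nat.max_spec a (fold_right max 0%nat (n :: A))) as [[H1 H2]|[H1 H2]]; rewrite H2; [right|left]; auto.
  apply IHA; congruence. Qed.
Lemma max_ge A x : In x A -> (x <= fold_right max 0%nat A)%nat.
Proof. induction A; simpl; intros; [tauto|]. destruct H; subst; [lia|]. specialize (IHA H); lia. Qed.

Lemma symdiff_pos A : A <> [] -> (1 <= symdiff_card A 1)%nat.
Proof. intros. unfold symdiff_card. set (M := fold_right max 0%nat A).
  assert (In (M + 1)%nat (filter (fun x => negb (memb x A)) (shift_set A 1))).
  { apply filter_In. split. unfold shift_set. apply (in_map (fun x => (x + 1)%nat)). apply max_in; auto.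
    destruct (memb (M+1) A) eqn:E; auto. apply memb_In in E. apply max_ge in E. unfold M in E. lia. }
  destruct (filter (fun x => negb (memb x A)) (shift_set A 1)); simpl in *; [tauto|lia]. Qed.

Lemma FL_len Psi : F1 Psi -> forall M : nat, ev (fun N => (M <= length (Psi N))%nat).
Proof. intros [HN [Hne Hlim]] M. rewrite lim_ev in Hlim.
  destruct (Hlim (/ (INR M + 1))) as [N HN']. apply Rinv_0_lt_compat; pose proof (pos_INR M); lra.
  exists N; intros n Hn. specialize (HN' n Hn). 
  assert (Hl : (0 < length (Psi n))%nat) by (destruct (Psi n) eqn:E; [exfalso; apply (Hne n); auto|simpl; lia]).
  pose proof (symdiff_pos (Psi n) (Hne n)). apply le_INR in H. apply lt_INR in Hl. simpl in H, Hl.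
  rewrite Rminus_0_r, Rabs_pos_eq in HN'. 2:{ apply Rmult_le_pos; [apply pos_INR|left; apply Rinv_0_lt_compat; lra]. }
  destruct (le_lt_dec M (length (Psi n))); auto. exfalso. apply lt_INR in l. 
  assert (/ INR (length (Psi n)) <= INR (symdiff_card (Psi n) 1) / INR (length (Psi n))).
  { unfold Rdiv. rewrite <- (Rmult_1_l (/ INR (length (Psi n)))) at 1. apply Rmult_le_compat_r; auto. left; apply Rinv_0_lt_compat; lra. }
  assert (/ (INR M + 1) <= / INR (length (Psi n))). { apply Rinv_le_contravar; lra. } lra. Qed.


Lemma F1_of Phi Psi : Folner Phi -> (forall N, exists m, Psi N = Phi m) -> TS Phi Psi -> F1 Psi.
Proof. intros [H1 [H2 H3]] Hm HT. split; [|split].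
  - intros N. destruct (Hm N) as [m ->]; auto.
  - intros N. destruct (Hm N) as [m ->]; auto.
  - apply (TS_lim Phi Psi (fun A => INR (symdiff_card A 1) / INR (length A))); auto. Qed.

Definition S2 (A : list nat) (g : nat -> C) : R := ravg A (fun n => n2 (g n)).

Lemma S2_nonneg A g : 0 <= S2 A g.
Proof. apply ravg_nonneg; intros; apply n2_ge0. Qed.

Lemma Phinorm_eq Psi g : Phinorm Psi g =
  match LimSup_seq (fun N => S2 (Psi N) g) with
  | Finite r => Finite (sqrt r) | p_infty => p_infty | m_infty => m_infty end.
Proof. unfold Phinorm. replace (fun N => ravg (Psi N) (fun n => Cmod (g n) ^ 2)) with (fun N => S2 (Psi N) g); auto.
  apply functional_extensionality; intros N. unfold S2. apply ravg_ext; intros; rewrite Cmod2; auto. Qed.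

Lemma phin_lt_ev Psi g e : 0 < e -> Rbar_lt (Phinorm Psi g) (Finite e) ->
  exists r, r < e * e /\ ev (fun N => S2 (Psi N) g <= r).
Proof. intros He H. rewrite Phinorm_eq in H. pose proof (LimSup_correct (fun N => S2 (Psi N) g)) as HL.
  destruct (LimSup_seq (fun N => S2 (Psi N) g)) as [l| |]; simpl in H.
  - assert (Hl : l < e * e). { destruct (Rle_lt_dec l 0). nra. apply sqrt_lt_0_alt. rewrite sqrt_square; lra. }
    assert (Hp : 0 < (e * e - l) / 2) by lra.
    destruct (HL (mkposreal _ Hp)) as [_ [N HN]]. exists (l + (e * e - l) / 2). split; [lra|].
    exists N; intros n Hn; specialize (HN n Hn); simpl in HN; lra.
  - tauto.
  - destruct (HL 0) as [N HN]. exists 0; split; [nra|]. exists N; intros; left; auto. Qed.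

Lemma ev_phin_lt Psi g e r : 0 < e -> r < e * e -> ev (fun N => S2 (Psi N) g <= r) -> Rbar_lt (Phinorm Psi g) (Finite e).
Proof. intros He Hr [N HN]. rewrite Phinorm_eq.
  assert (Hle : Rbar_le (LimSup_seq (fun N => S2 (Psi N) g)) (LimSup_seq (fun _ => r))).
  { apply LimSup_le. exists N; auto. }
  rewrite LimSup_seq_const in Hle. destruct (LimSup_seq (fun N => S2 (Psi N) g)) as [l| |]; simpl in *; auto.
  apply Rle_lt_trans with (sqrt r). apply sqrt_le_1_alt; auto.
  destruct (Rle_lt_dec r 0). rewrite sqrt_neg_0; auto. 
  rewrite <- (sqrt_square e) by lra. apply sqrt_lt_1_alt. lra. Qed.

Lemma L2_ev Psi g : L2 Psi g <-> exists M, ev (fun N => S2 (Psi N) g <= M).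
Proof. unfold L2. split.
  - intros H. rewrite Phinorm_eq in H. pose proof (LimSup_correct (fun N => S2 (Psi N) g)) as HL.
    destruct (LimSup_seq (fun N => S2 (Psi N) g)) as [l| |]; simpl in H.
    + destruct (HL (mkposreal 1 Rlt_0_1)) as [_ [N HN]]. exists (l + 1); exists N; intros; left; apply HN; auto.
    + tauto.
    + destruct (HL 0) as [N HN]. exists 0; exists N; intros; left; auto.
  - intros [M [N HN]]. rewrite Phinorm_eq.
    assert (Hle : Rbar_le (LimSup_seq (fun N => S2 (Psi N) g)) (LimSup_seq (fun _ => M))) by (apply LimSup_le; exists N; auto).
    rewrite LimSup_seq_const in Hle. destruct (LimSup_seq (fun N => S2 (Psi N) g)); simpl in *; auto. Qed.

Lemma phin_lim Psi g l : is_lim_seq (fun N => S2 (Psi N) g) (Finite l) -> Phinorm Psi g = Finite (sqrt l).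
Proof. intros H. rewrite Phinorm_eq. apply is_lim_LimSup_seq, is_LimSup_seq_unique in H. rewrite H. auto. Qed.

Lemma phin_ge Psi g r (w : nat -> R) l : Phinorm Psi g = Finite r -> is_lim_seq w (Finite l) ->
  ev (fun N => w N <= S2 (Psi N) g) -> sqrt l <= r.
Proof. intros E Hw [N HN]. rewrite Phinorm_eq in E.
  assert (Hle : Rbar_le (LimSup_seq w) (LimSup_seq (fun N => S2 (Psi N) g))) by (apply LimSup_le; exists N; auto).
  apply is_lim_LimSup_seq, is_LimSup_seq_unique in Hw. rewrite Hw in Hle.
  destruct (LimSup_seq (fun N => S2 (Psi N) g)); try discriminate. injection E as <-. simpl in Hle.
  apply sqrt_le_1_alt; auto. Qed.

Definition tp (L : list (C * R)) (n : nat) : C :=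
  fold_right Cplus (RtoC 0) (map (fun p => Cmult (fst p) (cexp2pi (snd p * INR n))) L).

Lemma tp_nil n : tp [] n = RtoC 0.
Proof. reflexivity. Qed.
Lemma tp_cons p L n : tp (p :: L) n = (fst p * cexp2pi (snd p * INR n) + tp L n)%C.
Proof. reflexivity. Qed.

Lemma tp_trig L : trig_poly (tp L).
Proof. exists (map (fun p => (fst p, frac_part (snd p))) L). split.
  - intros p Hp. apply in_map_iff in Hp. destruct Hp as [q [<- _]]. simpl. pose proof (base_fp (snd q)). lra.
  - intros n. induction L; auto. rewrite tp_cons, IHL. simpl. f_equal. f_equal.
    unfold frac_part. replace (snd a * INR n) with ((snd a - IZR (Int_part (snd a))) * INR n + IZR (Int_part (snd a) * Z.of_nat n)).
    apply cexp_intZ. rewrite mult_IZR, <- INR_IZR_INZ. ring. Qed.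

Lemma trig_tp a : trig_poly a -> exists L, forall n, a n = tp L n.
Proof. intros [cs [_ H]]. exists cs. auto. Qed.

Lemma tp_app L1 L2 n : tp (L1 ++ L2) n = (tp L1 n + tp L2 n)%C.
Proof. induction L1; simpl. rewrite tp_nil; cring. rewrite !tp_cons, IHL1. cring. Qed.

Definition tpscal (c : C) (L : list (C * R)) : list (C * R) := map (fun p => (c * fst p, snd p)%C) L.
Lemma tp_scal c L n : tp (tpscal c L) n = (c * tp L n)%C.
Proof. induction L; simpl. rewrite tp_nil; cring. unfold tpscal in *. simpl. rewrite !tp_cons, IHL. simpl. cring. Qed.

Definition tpmul (L1 L2 : list (C * R)) : list (C * R) := flat_map (fun p => map (fun q => (Cmult (fst p) (fst q), Rplus (snd p) (snd q))) L2) L1.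
Lemma tp_mul L1 L2 n : tp (tpmul L1 L2) n = (tp L1 n * tp L2 n)%C.
Proof. induction L1; simpl. rewrite tp_nil; cring. unfold tpmul in *. simpl. rewrite tp_app, IHL1, tp_cons.
  replace (tp (map (fun q : C * R => ((fst a * fst q)%C, snd a + snd q)) L2) n) with (fst a * cexp2pi (snd a * INR n) * tp L2 n)%C.
  cring. clear IHL1. induction L2; simpl. rewrite tp_nil; cring. rewrite !tp_cons, <- IHL2. simpl.
  rewrite Rmult_plus_distr_r, cexp_add. cring. Qed.

Definition tpconj (L : list (C * R)) : list (C * R) := map (fun p => (Cconj (fst p), - snd p)) L.
Lemma cexp_conj t : Cconj (cexp2pi t) = cexp2pi (- t).
Proof. unfold cexp2pi, Cconj; simpl. replace (2 * PI * - t) with (- (2 * PI * t)) by ring. rewrite cos_neg, sin_neg. auto. Qed.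
Lemma tp_conj L n : tp (tpconj L) n = Cconj (tp L n).
Proof. induction L; simpl. rewrite tp_nil. cring. unfold tpconj in *; simpl. rewrite !tp_cons, IHL. simpl.
  replace (- snd a * INR n) with (- (snd a * INR n)) by ring. rewrite <- cexp_conj. cring. Qed.

Lemma tp_const c n : tp [(c, 0)] n = c.
Proof. rewrite tp_cons, tp_nil. simpl. rewrite Rmult_0_l, cexp_0. cring. Qed.

Definition sumabs (L : list (C * R)) : R := fold_right (fun p acc => Cmod (fst p) + acc) 0 L.
Lemma tp_bound L n : Cmod (tp L n) <= sumabs L.
Proof. induction L; simpl. rewrite tp_nil, Cmod_0. lra. rewrite tp_cons. eapply Rle_trans; [apply Cmod_triangle|].
  rewrite Cmod_mult, Cmod_cexp. lra. Qed.
Lemma sumabs_nonneg L : 0 <= sumabs L.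
Proof. induction L; simpl; [lra|]. pose proof (Cmod_ge_0 (fst a)); lra. Qed.

Definition RT (u : nat -> R) := exists L, forall n, RtoC (u n) = tp L n.
Lemma RT_const c : RT (fun _ => c).
Proof. exists [(RtoC c, 0)]. intros; rewrite tp_const; auto. Qed.
Lemma RT_plus u v : RT u -> RT v -> RT (fun n => u n + v n).
Proof. intros [L1 H1] [L2 H2]. exists (L1 ++ L2). intros; rewrite tp_app, <- H1, <- H2. cring. Qed.
Lemma RT_mult u v : RT u -> RT v -> RT (fun n => u n * v n).
Proof. intros [L1 H1] [L2 H2]. exists (tpmul L1 L2). intros; rewrite tp_mul, <- H1, <- H2. cring. Qed.
Lemma RT_scal c u : RT u -> RT (fun n => c * u n).
Proof. intros [L1 H1]. exists (tpscal (RtoC c) L1). intros; rewrite tp_scal, <- H1. cring. Qed.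
Lemma RT_re L : RT (fun n => fst (tp L n)).
Proof. exists (tpscal (RtoC (/2)) (L ++ tpconj L)). intros n. rewrite tp_scal, tp_app, tp_conj.
  apply injective_projections; unfold Cconj, Cplus, Cmult, RtoC; simpl; field. Qed.

Definition BesT Psi g := forall eps, 0 < eps -> exists L, ev (fun N => S2 (Psi N) (fun n => g n - tp L n)%C <= eps).

Lemma Bes_BesT Psi g : Bes Psi g -> BesT Psi g.
Proof. intros H eps He. destruct (H (sqrt eps)) as [a [Ha Hn]]. apply sqrt_lt_R0; auto.
  destruct (trig_tp a Ha) as [L HL]. exists L.
  destruct (phin_lt_ev _ _ _ (sqrt_lt_R0 _ He) Hn) as [r [Hr Hev]]. rewrite sqrt_sqrt in Hr by lra.
  eapply ev_mono; [|apply Hev]. intros N HN. simpl in HN.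
  replace (S2 (Psi N) (fun n => g n - tp L n)%C) with (S2 (Psi N) (fun n => g n - a n)%C). lra.
  unfold S2; apply ravg_ext; intros; rewrite HL; auto. Qed.

Lemma BesT_Bes Psi g : BesT Psi g -> Bes Psi g.
Proof. intros H eps He. destruct (H (eps * eps / 2)) as [L HL]. nra. exists (tp L). split. apply tp_trig.
  apply (ev_phin_lt _ _ _ (eps * eps / 2)); auto. nra. Qed.

Lemma BesT_TS Psi Psi' g : TS Psi Psi' -> BesT Psi g -> BesT Psi' g.
Proof. intros HT H eps He. destruct (H eps He) as [L HL]. exists L.
  apply (TS_ev Psi Psi' (fun A => S2 A (fun n => g n - tp L n)%C <= eps)); auto. Qed.

Lemma L2_TS Psi Psi' g : TS Psi Psi' -> L2 Psi g -> L2 Psi' g.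
Proof. rewrite !L2_ev. intros HT [M HM]. exists M. apply (TS_ev Psi Psi' (fun A => S2 A g <= M)); auto. Qed.

Lemma S2_le A g h : (forall n, n2 (g n) <= n2 (h n)) -> S2 A g <= S2 A h.
Proof. intros; apply ravg_le; auto. Qed.

Lemma S2_tri A g h k : S2 A (fun n => g n - h n)%C <= 2 * S2 A (fun n => g n - k n)%C + 2 * S2 A (fun n => k n - h n)%C.
Proof. unfold S2. rewrite <- !ravg_scal, <- ravg_plus. apply ravg_le. intros.
  replace (g n - h n)%C with ((g n - k n) + (k n - h n))%C by cring. apply n2_plus_le. Qed.

Lemma S2_ext A g h : (forall n, g n = h n) -> S2 A g = S2 A h.
Proof. intros; unfold S2; apply ravg_ext; intros; rewrite H; auto. Qed.

Definition cross (A : list nat) (x y : nat -> C) : R := ravg A (fun n => fst (x n) * fst (y n) + snd (x n) * snd (y n)).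

Lemma cross_amgm A x y lam : 0 < lam -> Rabs (cross A x y) <= (lam * S2 A x + S2 A y / lam) / 2.
Proof. intros Hl. unfold cross, S2. apply Rabs_le. split.
  - replace (- ((lam * ravg A (fun n => n2 (x n)) + ravg A (fun n => n2 (y n)) / lam) / 2)) with
      (ravg A (fun n => - ((lam * n2 (x n) + n2 (y n) / lam) / 2))).
    apply ravg_le. intros. unfold n2. 
    assert (Hq : 0 <= (lam * fst (x n) + fst (y n)) ^ 2 / lam + (lam * snd (x n) + snd (y n)) ^ 2 / lam).
    { apply Rplus_le_le_0_compat; apply Rmult_le_pos; try apply pow2_ge_0; left; apply Rinv_0_lt_compat; lra. }
    replace ((lam * fst (x n) + fst (y n)) ^ 2 / lam + (lam * snd (x n) + snd (y n)) ^ 2 / lam) with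
      (lam * (fst (x n) * fst (x n) + snd (x n) * snd (x n)) + (fst (y n) * fst (y n) + snd (y n) * snd (y n)) / lam + 2 * (fst (x n) * fst (y n) + snd (x n) * snd (y n))) in Hq by (field; lra). lra.
    rewrite ravg_rs, ravg_rs, ravg_rs. unfold Rdiv. 
    replace (fun n => - ((lam * n2 (x n) + n2 (y n) * / lam) * / 2)) with (fun n => (-/2 * lam) * n2 (x n) + (-/2 * /lam) * n2 (y n)) by (apply functional_extensionality; intros; ring).
    rewrite rs_plus, !rs_scal. ring.
  - replace (((lam * ravg A (fun n => n2 (x n)) + ravg A (fun n => n2 (y n)) / lam) / 2)) with
      (ravg A (fun n => ((lam * n2 (x n) + n2 (y n) / lam) / 2))).
    apply ravg_le. intros. unfold n2. 
    assert (Hq : 0 <= (lam * fst (x n) - fst (y n)) ^ 2 / lam + (lam * snd (x n) - snd (y n)) ^ 2 / lam).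
    { apply Rplus_le_le_0_compat; apply Rmult_le_pos; try apply pow2_ge_0; left; apply Rinv_0_lt_compat; lra. }
    replace ((lam * fst (x n) - fst (y n)) ^ 2 / lam + (lam * snd (x n) - snd (y n)) ^ 2 / lam) with
      (lam * (fst (x n) * fst (x n) + snd (x n) * snd (x n)) + (fst (y n) * fst (y n) + snd (y n) * snd (y n)) / lam - 2 * (fst (x n) * fst (y n) + snd (x n) * snd (y n))) in Hq by (field; lra). lra.
    rewrite ravg_rs, ravg_rs, ravg_rs. unfold Rdiv. 
    replace (fun n => ((lam * n2 (x n) + n2 (y n) * / lam) * / 2)) with (fun n => (/2 * lam) * n2 (x n) + (/2 * /lam) * n2 (y n)) by (apply functional_extensionality; intros; ring).
    rewrite rs_plus, !rs_scal. ring. Qed.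

Lemma S2_minus_exp A x y : S2 A (fun n => x n - y n)%C = S2 A x - 2 * cross A x y + S2 A y.
Proof. unfold S2, cross. rewrite !ravg_rs. unfold Rdiv. 
  replace (rs A (fun n => n2 (x n - y n)%C)) with (rs A (fun n => n2 (x n)) + (-2) * rs A (fun n => fst (x n) * fst (y n) + snd (x n) * snd (y n)) + rs A (fun n => n2 (y n))). ring.
  rewrite <- rs_scal, <- !rs_plus. apply rs_ext; intros; unfold n2, Cminus, Cplus, Copp; simpl; ring. Qed.
Lemma S2_plus_exp A x y : S2 A (fun n => x n + y n)%C = S2 A x + 2 * cross A x y + S2 A y.
Proof. unfold S2, cross. rewrite !ravg_rs. unfold Rdiv. 
  replace (rs A (fun n => n2 (x n + y n)%C)) with (rs A (fun n => n2 (x n)) + 2 * rs A (fun n => fst (x n) * fst (y n) + snd (x n) * snd (y n)) + rs A (fun n => n2 (y n))). ring.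
  rewrite <- rs_scal, <- !rs_plus. apply rs_ext; intros; unfold n2, Cminus, Cplus, Copp; simpl; ring. Qed.

Lemma cross_plus_r A x y z : cross A x (fun n => y n + z n)%C = cross A x y + cross A x z.
Proof. unfold cross. rewrite <- ravg_plus. apply ravg_ext; intros; simpl; ring. Qed.
Lemma cross_minus_r A x y z : cross A x (fun n => y n - z n)%C = cross A x y - cross A x z.
Proof. unfold cross. unfold Rminus. rewrite <- (Rmult_1_l (ravg A (fun n => fst (x n) * fst (z n) + snd (x n) * snd (z n)))).
  rewrite Ropp_mult_distr_l, <- ravg_scal, <- ravg_plus. apply ravg_ext; intros; simpl; ring. Qed.
Lemma cross_ext A x y x' y' : (forall n, x n = x' n) -> (forall n, y n = y' n) -> cross A x y = cross A x' y'.
Proof. intros; unfold cross; apply ravg_ext; intros; rewrite H, H0; auto. Qed.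

Definition CF (A : list nat) (g : nat -> C) (th : R) : C := cavg A (fun n => g n * cexp2pi (INR n * th))%C.

Lemma CF_n2 A g th : n2 (CF A g th) <= S2 A g.
Proof. unfold CF. eapply Rle_trans; [apply cjensen|]. apply ravg_le. intros. rewrite n2_mult, n2_cexp. lra. Qed.
Lemma CF_Cmod A g th : Cmod (CF A g th) <= sqrt (S2 A g).
Proof. rewrite Cmod_n2. apply sqrt_le_1_alt, CF_n2. Qed.

Lemma CF_minus A g h th : CF A (fun n => g n - h n)%C th = (CF A g th - CF A h th)%C.
Proof. unfold CF. rewrite <- cavg_minus. apply cavg_ext; intros; cring. Qed.
Lemma CF_plus A g h th : CF A (fun n => g n + h n)%C th = (CF A g th + CF A h th)%C.
Proof. unfold CF. rewrite <- cavg_plus. apply cavg_ext; intros; cring. Qed.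

Lemma CF_char A c phi th : CF A (fun n => c * cexp2pi (phi * INR n))%C th = (c * cavg A (fun n => cexp2pi ((phi + th) * INR n)))%C.
Proof. unfold CF. rewrite <- cavg_scal. apply cavg_ext; intros. rewrite Rmult_plus_distr_r, cexp_add. rewrite (Rmult_comm th). cring. Qed.

Lemma cross_char A x c phi : cross A x (fun n => c * cexp2pi (phi * INR n))%C =
  fst c * fst (CF A x (- phi)) + snd c * snd (CF A x (- phi)).
Proof. unfold cross, CF. rewrite cavg_fst, cavg_snd, <- !ravg_scal, <- ravg_plus. apply ravg_ext. intros.
  replace (INR n * - phi) with (- (phi * INR n)) by ring. unfold cexp2pi. simpl.
  replace (2 * PI * - (phi * INR n)) with (- (2 * PI * (phi * INR n))) by ring. rewrite cos_neg, sin_neg. ring. Qed.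

Lemma cross_tp_lim Psi x L : (forall p, In p L -> CL (fun N => CF (Psi N) x (- snd p)) (RtoC 0)) ->
  is_lim_seq (fun N => cross (Psi N) x (tp L)) 0.
Proof. induction L; intros H.
  - eapply is_lim_seq_ext; [|apply is_lim_seq_const]. intros; unfold cross. simpl.
    rewrite (ravg_ext _ _ (fun n => 0 * 1)). rewrite ravg_scal; ring. intros; unfold tp; simpl; ring.
  - eapply is_lim_seq_ext. intros N. symmetry. rewrite (cross_ext _ x (tp (a :: L)) x (fun n => fst a * cexp2pi (snd a * INR n) + tp L n)%C) by auto.
    rewrite cross_plus_r, cross_char. reflexivity.
    apply lim0_plus; [|apply IHL; intros; apply H; simpl; auto].
    specialize (H a (or_introl eq_refl)). apply lim0_plus; apply lim0_scal.
    apply CL_fst in H; auto. apply CL_snd in H; auto. Qed.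

Definition PerpAll Psi A := forall th : R, CL (fun N => CF (Psi N) A th) (RtoC 0).

Lemma PerpAll_TS Psi Psi' A : TS Psi Psi' -> PerpAll Psi A -> PerpAll Psi' A.
Proof. intros HT H th. apply (TS_CL Psi Psi' (fun B => CF B A th)); auto. Qed.

Lemma PerpAll_Bes_perp Psi A : L2 Psi A -> PerpAll Psi A -> Bes_perp Psi A.
Proof. intros H1 H2. split; auto. intros th _. specialize (H2 th). unfold CL in H2.
  eapply is_lim_seq_ext; [|apply H2]. intros N. simpl. unfold CF. f_equal. cring. Qed.

Lemma BesT_minus Psi g h : BesT Psi g -> BesT Psi h -> BesT Psi (fun n => g n - h n)%C.
Proof. intros Hg Hh eps He. destruct (Hg (eps / 4)) as [L1 H1]; [lra|]. destruct (Hh (eps / 4)) as [L2 H2]; [lra|].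
  exists (L1 ++ tpscal (RtoC (-1)) L2). eapply ev_mono; [|apply (ev_and _ _ H1 H2)]. intros N [HN1 HN2].
  eapply Rle_trans with (2 * S2 (Psi N) (fun n => g n - tp L1 n)%C + 2 * S2 (Psi N) (fun n => h n - tp L2 n)%C); [|lra].
  unfold S2. rewrite <- !ravg_scal, <- ravg_plus. apply ravg_le. intros n _.
  rewrite tp_app, tp_scal. eapply Rle_trans; [|apply n2_minus_le]. right. f_equal. cring. Qed.

Lemma BesT_tp Psi L : BesT Psi (tp L).
Proof. intros eps He. exists L. exists 0%nat. intros. unfold S2. rewrite (ravg_ext _ _ (fun _ => 0 * 0)).
  rewrite ravg_scal. lra. intros. replace (tp L n - tp L n)%C with (RtoC 0) by cring. unfold n2; simpl; ring. Qed.

Lemma L2_bound Psi g : L2 Psi g -> exists M, 0 <= M /\ ev (fun N => S2 (Psi N) g <= M).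
Proof. rewrite L2_ev. intros [M HM]. exists (Rmax M 0). split. apply Rmax_r. eapply ev_mono; [|apply HM].
  intros; simpl in *. pose proof (Rmax_l M 0). lra. Qed.

Lemma Orth Psi A D : L2 Psi A -> PerpAll Psi A -> BesT Psi D -> is_lim_seq (fun N => cross (Psi N) A D) 0.
Proof. intros HL HP HD. destruct (L2_bound _ _ HL) as [M [HM0 HM]]. apply lim_ev. intros eps He.
  set (lam := eps / (2 * (M + 1))). assert (Hl : 0 < lam) by (unfold lam; apply Rdiv_lt_0_compat; lra).
  destruct (HD (lam * eps / 2)) as [L HDL]. nra.
  pose proof (cross_tp_lim Psi A L (fun p _ => HP (- snd p))) as HC. rewrite lim_ev in HC.
  destruct (HC (eps / 2)) as [N1 HN1]; [lra|].
  eapply ev_mono; [|apply (ev_and _ _ (ev_and _ _ HM HDL) (ex_intro _ N1 HN1))]. intros N [[H1 H2] H3]. simpl in *.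
  rewrite (cross_ext _ A D A (fun n => (D n - tp L n) + tp L n)%C) by (intros; cring || auto).
  rewrite cross_plus_r. rewrite Rminus_0_r in *. pose proof (cross_amgm (Psi N) A (fun n => D n - tp L n)%C lam Hl).
  assert (lam * S2 (Psi N) A <= eps / 2 * (M / (M + 1))).
  { unfold lam. replace (eps / (2 * (M + 1)) * S2 (Psi N) A) with (eps / 2 * (S2 (Psi N) A / (M + 1))) by (field; lra).
    apply Rmult_le_compat_l; [lra|]. unfold Rdiv; apply Rmult_le_compat_r; auto. left; apply Rinv_0_lt_compat; lra. }
  assert (M / (M + 1) <= 1). { apply (Rmult_le_reg_r (M + 1)); [lra|]. unfold Rdiv. rewrite Rmult_assoc, Rinv_l by lra. lra. }
  assert (S2 (Psi N) (fun n => D n - tp L n)%C / lam <= eps / 2).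
  { apply (Rmult_le_reg_r lam); auto. unfold Rdiv. rewrite Rmult_assoc, Rinv_l by lra. lra. }
  assert (Rabs (cross (Psi N) A (fun n => D n - tp L n)%C) <= eps / 2) by nra.
  eapply Rle_lt_trans; [apply Rabs_triang|]. lra. Qed.

Lemma Glb_lemma Psi F B lam : BesT Psi B -> L2 Psi (fun n => F n - B n)%C -> PerpAll Psi (fun n => F n - B n)%C ->
  is_lim_seq (fun N => S2 (Psi N) (fun n => F n - B n)%C) (Finite lam) ->
  Phinorm Psi (fun n => F n - B n)%C =
      Glb_Rbar (fun r => exists g, Bes Psi g /\ Phinorm Psi (fun n => Cminus (F n) (g n)) = Finite r).
Proof. intros HB HL HP Hlim. rewrite (phin_lim _ _ _ Hlim). symmetry. apply is_glb_Rbar_unique. split.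
  - intros r [g [Hg E]]. simpl. apply (phin_ge Psi _ r (fun N => S2 (Psi N) (fun n => F n - B n)%C + 2 * cross (Psi N) (fun n => F n - B n)%C (fun n => B n - g n)%C) lam E).
    + replace (Finite lam) with (Finite (lam + 0)) by (f_equal; ring).
      apply is_lim_seq_plus'; auto. apply lim0_scal. apply Orth; auto. apply BesT_minus; auto. apply Bes_BesT; auto.
    + exists 0%nat; intros N _. rewrite (S2_ext _ (fun n => F n - g n)%C (fun n => (F n - B n) + (B n - g n))%C) by (intros; cring).
      rewrite S2_plus_exp. pose proof (S2_nonneg (Psi N) (fun n => B n - g n)%C). lra.
  - intros b Hb. apply Hb. exists B. split. apply BesT_Bes; auto. apply (phin_lim _ _ _ Hlim). Qed.

Definition clip (a b x : R) : R := (a + b + Rabs (x - a) - Rabs (x - b)) / 2.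

Lemma clip_range a b x : a <= b -> a <= clip a b x <= b.
Proof. intros. unfold clip. unfold Rabs; destruct Rcase_abs; destruct Rcase_abs; lra. Qed.
Lemma clip_lip a b x y : Rabs (clip a b x - clip a b y) <= Rabs (x - y).
Proof. unfold clip. pose proof (Rabs_triang_inv (x - a) (y - a)). pose proof (Rabs_triang_inv (y - a) (x - a)).
  pose proof (Rabs_triang_inv (x - b) (y - b)). pose proof (Rabs_triang_inv (y - b) (x - b)).
  replace (x - a - (y - a)) with (x - y) in * by ring. replace (y - a - (x - a)) with (-(x - y)) in * by ring.
  replace (x - b - (y - b)) with (x - y) in * by ring. replace (y - b - (x - b)) with (-(x - y)) in * by ring.
  rewrite Rabs_Ropp in *. apply Rabs_le. split; lra. Qed.
Lemma clip_obtuse a b x fr : a <= b -> a <= fr <= b -> (fr - clip a b x) * (x - clip a b x) <= 0.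
Proof. intros. unfold clip. unfold Rabs; destruct Rcase_abs; destruct Rcase_abs; nra. Qed.
Lemma clip_id a b x : a <= x <= b -> clip a b x = x.
Proof. intros. unfold clip. unfold Rabs; destruct Rcase_abs; destruct Rcase_abs; lra. Qed.

Definition cclip a b (z : C) : C := RtoC (clip a b (fst z)).

Lemma n2_cclip a b z w : n2 (cclip a b z - cclip a b w)%C <= n2 (z - w)%C.
Proof. unfold cclip, n2, Cminus, Cplus, Copp, RtoC; simpl. pose proof (clip_lip a b (fst z) (fst w)).
  apply Rsqr_le_abs_1 in H. unfold Rsqr in H. pose proof (pow2_ge_0 (snd z + - snd w)). nra. Qed.

Lemma pow_le1 x n : 0 <= x <= 1 -> x ^ n <= 1.
Proof. intros. rewrite <- (pow1 n). apply pow_incr; lra. Qed.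

Fixpoint pk (k : nat) (t : R) : R := match k with O => 0 | S k => pk k t + (t - pk k t * pk k t) / 2 end.

Lemma pk_bound k t : 0 <= t <= 1 -> 0 <= sqrt t - pk k t <= sqrt t * (1 - sqrt t / 2) ^ k.
Proof. intros Ht. set (s := sqrt t). assert (Hs : 0 <= s <= 1) by (unfold s; split; [apply sqrt_pos|]; rewrite <- sqrt_1; apply sqrt_le_1_alt; lra).
  assert (Hts : t = s * s) by (unfold s; rewrite sqrt_sqrt; lra). clearbody s.
  induction k; simpl. lra.
  assert (Hp : 0 <= (1 - s / 2) ^ k <= 1) by (split; [apply pow_le; lra| apply pow_le1; lra]).
  destruct IHk as [H1 H2].
  assert (E : s - (pk k t + (t - pk k t * pk k t) / 2) = (s - pk k t) * (1 - (s + pk k t) / 2)) by (set (p := pk k t); clearbody p; rewrite Hts; field).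
  rewrite E. assert (s - pk k t <= s) by nra. split. apply Rmult_le_pos; lra.
  apply Rle_trans with ((s - pk k t) * (1 - s / 2)). apply Rmult_le_compat_l; lra.
  replace (s * ((1 - s / 2) * (1 - s / 2) ^ k)) with ((s * (1 - s / 2) ^ k) * (1 - s / 2)) by ring.
  apply Rmult_le_compat_r; lra. Qed.

Lemma pk_unif d : 0 < d -> exists k, forall t, 0 <= t <= 1 -> sqrt t - pk k t <= d.
Proof. intros Hd. set (d' := Rmin d 1). assert (Hd' : 0 < d' <= 1 /\ d' <= d) by (unfold d'; split; [split; [apply Rmin_glb_lt; lra|apply Rmin_r]|apply Rmin_l]).
  destruct (pow_lt_1_zero (1 - d' / 2) ltac:(apply Rabs_def1; lra) d' ltac:(lra)) as [k Hk].
  exists k. intros t Ht. destruct (pk_bound k t Ht) as [_ H].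
  assert (Hs : 0 <= sqrt t <= 1) by (split; [apply sqrt_pos|]; rewrite <- sqrt_1; apply sqrt_le_1_alt; lra).
  destruct (Rle_lt_dec (sqrt t) d').
  - assert ((1 - sqrt t / 2) ^ k <= 1) by (apply pow_le1; lra).
    pose proof (pow_le (1 - sqrt t / 2) k ltac:(lra)). nra.
  - specialize (Hk k (Nat.le_refl _)). rewrite Rabs_pos_eq in Hk by (apply pow_le; lra).
    assert ((1 - sqrt t / 2) ^ k <= (1 - d' / 2) ^ k) by (apply pow_incr; lra).
    pose proof (pow_le (1 - sqrt t / 2) k ltac:(lra)). nra. Qed.

Lemma RT_pk k w : RT w -> RT (fun n => pk k (w n)).
Proof. intros Hw. induction k; simpl. apply RT_const.
  replace (fun n => pk k (w n) + (w n - pk k (w n) * pk k (w n)) / 2) with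
    (fun n => pk k (w n) + / 2 * (w n + -1 * (pk k (w n) * pk k (w n)))) by (apply functional_extensionality; intros; field).
  apply (RT_plus _ _ IHk (RT_scal (/2) _ (RT_plus _ _ Hw (RT_scal (-1) _ (RT_mult _ _ IHk IHk))))). Qed.

Lemma RT_abs_approx x R d : RT x -> 0 < R -> (forall n, Rabs (x n) <= R) -> 0 < d ->
  exists q, RT q /\ forall n, Rabs (Rabs (x n) - q n) <= d.
Proof. intros Hx HR Hb Hd. destruct (pk_unif (d / R)) as [k Hk]. apply Rdiv_lt_0_compat; lra.
  exists (fun n => R * pk k (x n * x n / (R * R))). split.
  - apply RT_scal, RT_pk. replace (fun n => x n * x n / (R * R)) with (fun n => / (R * R) * (x n * x n)).
    apply RT_scal, RT_mult; auto. apply functional_extensionality; intros; field; lra.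
  - intros n. assert (Ht : 0 <= x n * x n / (R * R) <= 1).
    { split. apply Rmult_le_pos; [nra|left; apply Rinv_0_lt_compat; nra].
      specialize (Hb n). apply Rsqr_le_abs_1 in Hb || idtac. 
      assert (x n * x n <= R * R). { pose proof (Rsqr_le_abs_1 (x n) R). rewrite (Rabs_pos_eq R) in H by lra. unfold Rsqr in H. auto. }
      apply (Rmult_le_reg_r (R * R)); [nra|]. unfold Rdiv. rewrite Rmult_assoc, Rinv_l by nra. lra. }
    specialize (Hk _ Ht). destruct (pk_bound k _ Ht) as [H0 _].
    assert (E : sqrt (x n * x n / (R * R)) = Rabs (x n) / R).
    { rewrite <- (sqrt_Rsqr (Rabs (x n) / R)). f_equal. unfold Rsqr. unfold Rdiv. 
      rewrite <- (Rabs_mult (x n) (x n)) || idtac. replace (Rabs (x n) * / R * (Rabs (x n) * / R)) with ((Rabs (x n) * Rabs (x n)) * / (R * R)) by (field; lra).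
      rewrite <- Rabs_mult, Rabs_pos_eq by nra. auto. apply Rmult_le_pos; [apply Rabs_pos|left; apply Rinv_0_lt_compat; lra]. }
    rewrite E in Hk, H0. apply Rabs_le.
    assert (Q : Rabs (x n) - R * pk k (x n * x n / (R * R)) = R * (Rabs (x n) / R - pk k (x n * x n / (R * R)))) by (field; lra).
    rewrite Q. assert (Q1 : 0 <= R * (Rabs (x n) / R - pk k (x n * x n / (R * R)))) by (apply Rmult_le_pos; lra).
    assert (Q2 : R * (Rabs (x n) / R - pk k (x n * x n / (R * R))) <= R * (d / R)) by (apply Rmult_le_compat_l; lra).
    replace (R * (d / R)) with d in Q2 by (field; lra). lra. Qed.

Lemma clip_unif a b L d : 0 < d -> exists L', forall n, n2 (cclip a b (tp L n) - tp L' n)%C <= d.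
Proof. intros Hd. set (x := fun n => fst (tp L n)). set (R := sumabs L + Rabs a + Rabs b + 1).
  assert (Hx : forall n, Rabs (x n) <= sumabs L). { intros; unfold x. eapply Rle_trans; [apply Rabs_fst_le|apply tp_bound]. }
  set (e := Rmin d 1). assert (He : 0 < e <= 1 /\ e <= d) by (unfold e; split; [split; [apply Rmin_glb_lt; lra|apply Rmin_r]|apply Rmin_l]).
  pose proof (sumabs_nonneg L). pose proof (Rabs_pos a). pose proof (Rabs_pos b).
  destruct (RT_abs_approx (fun n => x n - a) R e) as [q1 [Hq1 Hq1b]].
  { apply RT_plus. apply RT_re. apply RT_const. } { unfold R; lra. }
  { intros; eapply Rle_trans; [apply Rabs_triang|]. rewrite Rabs_Ropp. specialize (Hx n). unfold R; lra. } lra.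
  destruct (RT_abs_approx (fun n => x n - b) R e) as [q2 [Hq2 Hq2b]].
  { apply RT_plus. apply RT_re. apply RT_const. } { unfold R; lra. }
  { intros; eapply Rle_trans; [apply Rabs_triang|]. rewrite Rabs_Ropp. specialize (Hx n). unfold R; lra. } lra.
  destruct (RT_scal (/2) _ (RT_plus _ _ (RT_plus _ _ (RT_const (a + b)) Hq1) (RT_scal (-1) _ Hq2))) as [L' HL'].
  exists L'. intros n. rewrite <- HL'. unfold cclip, clip, n2, Cminus, Cplus, Copp, RtoC; simpl. fold (x n).
  specialize (Hq1b n); specialize (Hq2b n).
  set (D := (a + b + Rabs (x n - a) - Rabs (x n - b)) / 2 + - (/ 2 * (a + b + q1 n + -1 * q2 n))).
  assert (Rabs D <= e). { unfold D. apply Rabs_le. apply abs_le_both in Hq1b. apply abs_le_both in Hq2b. split; lra. }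
  apply abs_le_both in H2. replace ((0 + - 0) * (0 + - 0)) with 0 by ring. nra. Qed.

Lemma BesT_clip Psi a b h : BesT Psi h -> BesT Psi (fun n => cclip a b (h n)).
Proof. intros Hh eps He. destruct (Hh (eps / 4)) as [L HL]; [lra|]. destruct (clip_unif a b L (eps / 4)) as [L' HL']; [lra|].
  exists L'. eapply ev_mono; [|apply HL]. intros N HN. simpl in HN.
  eapply Rle_trans; [apply (S2_tri _ _ _ (fun n => cclip a b (tp L n)))|].
  assert (S2 (Psi N) (fun n => cclip a b (h n) - cclip a b (tp L n))%C <= eps / 4).
  { eapply Rle_trans; [|apply HN]. apply S2_le. intros; apply n2_cclip. }
  assert (S2 (Psi N) (fun n => cclip a b (tp L n) - tp L' n)%C <= eps / 4).
  { unfold S2. eapply Rle_trans. apply ravg_le. intros; apply HL'. destruct (Psi N) eqn:E.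
    unfold ravg; simpl; unfold Rdiv; rewrite Rinv_0; lra. rewrite ravg_const by congruence. lra. }
  lra. Qed.

Lemma clip_correction Psi f h a b : a <= b -> (forall n, snd (f n) = 0 /\ a <= fst (f n) <= b) ->
  BesT Psi h -> L2 Psi (fun n => f n - h n)%C -> PerpAll Psi (fun n => f n - h n)%C ->
  is_lim_seq (fun N => S2 (Psi N) (fun n => h n - cclip a b (h n))%C) 0.
Proof. intros Hab Hf Hh HL HP.
  pose proof (Orth Psi _ (fun n => h n - cclip a b (h n))%C HL HP (BesT_minus _ _ _ Hh (BesT_clip _ a b _ Hh))) as HO.
  apply (lim0_le _ (fun N => -1 * cross (Psi N) (fun n => f n - h n)%C (fun n => h n - cclip a b (h n))%C)).
  - intros; apply S2_nonneg.
  - exists 0%nat; intros N _. unfold S2, cross. rewrite <- ravg_scal. apply ravg_le. intros n _.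
    destruct (Hf n) as [H1 H2]. unfold cclip, n2, Cminus, Cplus, Copp, RtoC; simpl.
    pose proof (clip_obtuse a b (fst (h n)) (fst (f n)) Hab H2). rewrite H1. nra.
  - apply lim0_scal; auto. Qed.

Definition gL (f : nat -> C) (L : list (C * R)) (n : nat) : C := (f n - tp L n)%C.

Lemma not_ev_freq (P : nat -> Prop) : ~ ev P -> freq (fun n => ~ P n).
Proof. intros H N. apply NNPP. intros H'. apply H. exists N. intros n Hn. apply NNPP. intros Hp. apply H'. exists n; auto. Qed.

Lemma sqrt_le_lin x : 0 <= x -> sqrt x <= x + 1.
Proof. intros. destruct (Rle_lt_dec x 1).
  - assert (sqrt x <= 1) by (rewrite <- sqrt_1; apply sqrt_le_1_alt; lra). lra.
  - assert (sqrt x <= x). { rewrite <- (sqrt_square x) at 2 by lra. apply sqrt_le_1_alt. nra. } lra. Qed.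

Section Step.
Variable Phi : nat -> list nat.
Variable g : nat -> C.

Definition Spec (pi s : nat -> nat) (c : C) (th : R) : Prop :=
  StrictInc s /\ 0 <= th < 1 /\ CL (fun N => CF (Phi (pi (s N))) g th) c /\
  (forall th' r, 0 <= th' < 1 -> 0 < r -> freq (fun N => r <= Cmod (CF (Phi (pi N)) g th')) -> r <= 2 * Cmod c).

Lemma step_lemma pi l : is_lim_seq (fun N => S2 (Phi (pi N)) g) (Finite l) -> exists s c th, Spec pi s c th.
Proof. intros Hl.
  set (G := fun N th => CF (Phi (pi N)) g th).
  assert (HB : ev (fun N => forall th, Cmod (G N th) <= l + 2)).
  { rewrite lim_ev in Hl. destruct (Hl 1 Rlt_0_1) as [N HN]. exists N; intros n Hn th. specialize (HN n Hn).
    apply Rlt_le, abs_le_both in HN. unfold G. eapply Rle_trans; [apply CF_Cmod|].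
    pose proof (S2_nonneg (Phi (pi n)) g). pose proof (sqrt_le_lin _ H). lra. }
  destruct (classic (exists th r, 0 <= th < 1 /\ 0 < r /\ freq (fun N => r <= Cmod (G N th)))) as [Hc|Hc].
  - set (E := fun r => exists th, 0 <= th < 1 /\ freq (fun N => r <= Cmod (G N th))).
    assert (Ebound : forall r, E r -> r <= l + 2).
    { intros r [th [_ Hf]]. destruct (ev_freq _ _ HB Hf 0%nat) as [n [_ [H1 H2]]]. specialize (H1 th). lra. }
    destruct Hc as [th0 [r0 [Hth0 [Hr0 Hf0]]]].
    destruct (completeness E) as [sup [Hub Hlub]]. exists (l + 2); intros r Hr; apply Ebound; auto.
    exists r0, th0; split; auto.
    assert (Hs0 : r0 <= sup) by (apply Hub; exists th0; auto).
    assert (Hr1 : exists r1, E r1 /\ sup / 2 < r1).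
    { apply NNPP; intros H. assert (sup <= sup / 2). apply Hlub. intros r Hr. destruct (Rle_lt_dec r (sup / 2)); auto.
      exfalso; apply H; exists r; auto. lra. }
    destruct Hr1 as [r1 [[th1 [Hth1 Hf1]] Hr1]].
    destruct (extract (fun k n => r1 <= Cmod (G n th1))) as [s1 [Hs1 Hp1]].
    { intros k m. apply Hf1. }
    destruct (extract_C (fun k => G (s1 k) th1) (l + 2)) as [s2 [c [Hs2 Hc]]].
    { destruct HB as [N HN]. exists N; intros n Hn. apply HN. pose proof (si_ge s1 Hs1 n); lia. }
    exists (fun N => s1 (s2 N)), c, th1. split; [apply si_comp; auto|]. split; auto. split; [exact Hc|].
    assert (Hcr : r1 <= Cmod c).
    { destruct (Rle_lt_dec r1 (Cmod c)); auto. exfalso. unfold CL in Hc. rewrite lim_ev in Hc.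
      destruct (Hc (r1 - Cmod c)) as [N HN]; [lra|]. specialize (HN N (Nat.le_refl _)). rewrite Rminus_0_r, Rabs_pos_eq in HN by apply Cmod_ge_0.
      specialize (Hp1 (s2 N)). pose proof (Cmod_triangle (G (s1 (s2 N)) th1 - c) c).
      replace (G (s1 (s2 N)) th1 - c + c)%C with (G (s1 (s2 N)) th1) in H by cring. cbv beta in *. lra. }
    intros th' r Hth' Hr Hf. assert (r <= sup) by (apply Hub; exists th'; auto). lra.
  - exists (fun N => N), (RtoC 0), 0. split; [intros n; lia|]. split; [lra|]. split.
    + unfold CL. apply lim_ev. intros eps He. 
      assert (Hne : ~ freq (fun N => eps <= Cmod (G N 0))). { intros H. apply Hc. exists 0, eps. split; [lra|]. auto. }
      apply NNPP. intros H. apply Hne. apply not_ev_freq in H. intros N. destruct (H N) as [n [Hn Hp]]. exists n; split; auto.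
      rewrite Rminus_0_r, Rabs_pos_eq in Hp by apply Cmod_ge_0. replace (CF (Phi (pi n)) g 0 - 0)%C with (CF (Phi (pi n)) g 0) in Hp by cring. apply Rnot_lt_le; unfold G; auto.
    + intros th' r Hth' Hr Hf. exfalso. apply Hc. exists th', r. auto. Qed.
End Step.

Lemma CL_zero_Cmod (u : nat -> C) : CL u (RtoC 0) <-> is_lim_seq (fun N => Cmod (u N)) 0.
Proof. unfold CL. split; apply is_lim_seq_ext; intros; f_equal; cring. Qed.

Lemma tp_single_S2 A c th : A <> [] -> S2 A (fun n => c * cexp2pi (th * INR n))%C = n2 c.
Proof. intros. unfold S2. rewrite (ravg_ext _ _ (fun _ => n2 c)). apply ravg_const; auto.
  intros; rewrite n2_mult, n2_cexp; ring. Qed.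

Lemma lim_scal (v : nat -> R) a b : is_lim_seq v (Finite b) -> is_lim_seq (fun n => a * v n) (Finite (a * b)).
Proof. intros H. apply (is_lim_seq_scal_l v a b) in H. simpl in H. auto. Qed.

Lemma nat_above x : exists M : nat, x <= INR M.
Proof. destruct (archimed x) as [H1 _]. destruct (Z_le_gt_dec 0 (up x)).
  - exists (Z.to_nat (up x)). rewrite INR_IZR_INZ, Z2Nat.id by auto. lra.
  - exists 0%nat. simpl. apply Z.gt_lt in g. apply IZR_lt in g. lra. Qed.

Lemma ev_forall_le (P : nat -> nat -> Prop) j : (forall i, (i <= j)%nat -> ev (P i)) -> ev (fun N => forall i, (i <= j)%nat -> P i N).
Proof. induction j; intros H.
  - destruct (H 0%nat (Nat.le_refl _)) as [N HN]. exists N; intros n Hn i Hi. assert (i = 0%nat) by lia. subst; auto.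
  - destruct (IHj (fun i Hi => H i ltac:(lia))) as [N1 H1]. destruct (H (S j) (Nat.le_refl _)) as [N2 H2].
    exists (max N1 N2); intros n Hn i Hi. destruct (Nat.eq_dec i (S j)). subst; apply H2; lia. apply H1; lia. Qed.

Lemma n2_sym x y : n2 (x - y)%C = n2 (y - x)%C.
Proof. unfold n2, Cminus, Cplus, Copp; simpl; ring. Qed.

Lemma CF_frac A g th : CF A g th = CF A g (frac_part th).
Proof. unfold CF. apply cavg_ext. intros n _. f_equal.
  replace (INR n * th) with (INR n * frac_part th + IZR (Int_part th * Z.of_nat n)).
  apply cexp_intZ. unfold frac_part. rewrite mult_IZR, <- INR_IZR_INZ. ring. Qed.

Section Main.
Variable Phi : nat -> list nat.
Variable f : nat -> C.
Hypothesis HF : Folner Phi.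
Variable pi0 : nat -> nat.
Variable l0 : R.
Hypothesis Hpi0 : StrictInc pi0.
Hypothesis Hl0 : is_lim_seq (fun N => S2 (Phi (pi0 N)) (gL f [])) (Finite l0).

Definition PreP (pi : nat -> nat) (L : list (C * R)) :=
  StrictInc pi /\ exists l, is_lim_seq (fun N => S2 (Phi (pi N)) (gL f L)) (Finite l).

Lemma step_ex pi L : exists t : (nat -> nat) * C * R, PreP pi L -> Spec Phi (gL f L) pi (fst (fst t)) (snd (fst t)) (snd t).
Proof. destruct (classic (PreP pi L)) as [[H1 [l H2]]|H].
  - destruct (step_lemma Phi (gL f L) pi l H2) as [s [c [th Hs]]]. exists (s, c, th). auto.
  - exists ((fun n => n), RtoC 0, 0). intros; contradiction. Qed.

Definition stepF pi L := proj1_sig (constructive_indefinite_description _ (step_ex pi L)).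
Lemma stepF_spec pi L : PreP pi L -> Spec Phi (gL f L) pi (fst (fst (stepF pi L))) (snd (fst (stepF pi L))) (snd (stepF pi L)).
Proof. unfold stepF. destruct (constructive_indefinite_description _ _). simpl. auto. Qed.

Fixpoint state (k : nat) : (nat -> nat) * list (C * R) :=
  match k with
  | O => (pi0, [])
  | S k => let st := state k in let t := stepF (fst st) (snd st) in
      (fun N => fst st (fst (fst t) N), (snd (fst t), - snd t) :: snd st)
  end.

Definition pik k := fst (state k).
Definition Lk k := snd (state k).
Definition sk k := fst (fst (stepF (pik k) (Lk k))).
Definition ck k := snd (fst (stepF (pik k) (Lk k))).
Definition thk k := snd (stepF (pik k) (Lk k)).

Lemma pik_S k N : pik (S k) N = pik k (sk k N).
Proof. reflexivity. Qed.
Lemma Lk_S k : Lk (S k) = (ck k, - thk k) :: Lk k.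
Proof. reflexivity. Qed.
Lemma Lk_0 : Lk 0 = [].
Proof. reflexivity. Qed.
Lemma pik_0 : pik 0 = pi0.
Proof. reflexivity. Qed.

Fixpoint ell k := match k with O => l0 | S k => ell k - n2 (ck k) end.

Definition Inv k := StrictInc (pik k) /\ is_lim_seq (fun N => S2 (Phi (pik k N)) (gL f (Lk k))) (Finite (ell k)) /\
  (forall j, (j < k)%nat -> CL (fun N => CF (Phi (pik k N)) (gL f (Lk k)) (thk j)) (RtoC 0)) /\
  (forall j, (j < k)%nat -> 0 <= thk j < 1).

Lemma Inv_spec k : Inv k -> Spec Phi (gL f (Lk k)) (pik k) (sk k) (ck k) (thk k).
Proof. intros [H1 [H2 _]]. apply stepF_spec. split; auto. exists (ell k); auto. Qed.

Lemma Phi_ne m : Phi m <> [].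
Proof. destruct HF as [_ [H _]]; auto. Qed.

Lemma gL_S k n : gL f (Lk (S k)) n = (gL f (Lk k) n - ck k * cexp2pi (- thk k * INR n))%C.
Proof. unfold gL. rewrite Lk_S, tp_cons. simpl. cring. Qed.

Lemma Inv_S k : Inv k -> Inv (S k).
Proof. intros HI. pose proof (Inv_spec k HI) as [Hs [Hth [HCL Hmax]]]. destruct HI as [H1 [H2 [H3 H4]]].
  assert (HS : StrictInc (pik (S k))) by (intros N; rewrite !pik_S; apply si_mono; auto).
  set (c := ck k). set (th := thk k). fold c th in HCL, Hmax, Hth.
  assert (H2' : is_lim_seq (fun N => S2 (Phi (pik (S k) N)) (gL f (Lk k))) (Finite (ell k))).
  { apply (is_lim_seq_subseq (fun N => S2 (Phi (pik k N)) (gL f (Lk k)))); auto. apply eventually_subseq; auto. }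
  split; [auto|split; [|split]].
  - eapply is_lim_seq_ext.
    { intros N. symmetry. rewrite (S2_ext _ _ _ (gL_S k)). rewrite S2_minus_exp, tp_single_S2 by apply Phi_ne.
      rewrite cross_char, Ropp_involutive. reflexivity. }
    simpl ell. fold c th.
    replace (ell k - n2 c) with (ell k - 2 * (fst c * fst c + snd c * snd c) + n2 c) by (unfold n2; ring).
    apply is_lim_seq_plus'; [|apply is_lim_seq_const]. apply is_lim_seq_minus'; auto.
    apply lim_scal. apply is_lim_seq_plus'; apply lim_scal.
    apply CL_fst in HCL; auto. apply CL_snd in HCL; auto.
  - intros j Hj.
    assert (E : forall N, CF (Phi (pik (S k) N)) (gL f (Lk (S k))) (thk j) =
       (CF (Phi (pik (S k) N)) (gL f (Lk k)) (thk j) - c * cavg (Phi (pik (S k) N)) (fun n => cexp2pi ((- th + thk j) * INR n)))%C).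
    { intros N. rewrite (CF_ext_helper _ _ _ _ (gL_S k)) || idtac.
      unfold CF at 1. rewrite (cavg_ext _ _ (fun n => (gL f (Lk k) n * cexp2pi (INR n * thk j) - c * cexp2pi (- th * INR n) * cexp2pi (INR n * thk j))%C)).
      2:{ intros; rewrite gL_S; fold c th; cring. }
      rewrite cavg_minus. fold (CF (Phi (pik (S k) N)) (gL f (Lk k)) (thk j)). f_equal.
      rewrite <- (CF_char _ c (- th) (thk j)). unfold CF. apply cavg_ext; intros; auto. }
    eapply CL_ext; [intros N; symmetry; apply E|]. replace (RtoC 0) with (RtoC 0 - c * RtoC 0)%C by cring.
    destruct (Nat.eq_dec j k) as [->|Hjk].
    + fold th. replace (RtoC 0 - c * RtoC 0)%C with (c - c * RtoC 1)%C by cring. apply CL_minus; auto.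
      apply CL_scal. eapply CL_ext; [|apply CL_const]. intros N. simpl. rewrite cavg_ext with (h := fun _ => RtoC 1).
      rewrite cavg_const by apply Phi_ne; auto. intros. replace (- th + th) with 0 by ring. rewrite Rmult_0_l, cexp_0; auto.
    + apply CL_minus. apply (CL_sub (fun N => CF (Phi (pik k N)) (gL f (Lk k)) (thk j))); auto. apply H3; lia.
      destruct (Ceq_dec c (RtoC 0)) as [Hc0|Hc0].
      * rewrite Hc0. eapply CL_ext; [|apply CL_const]. intros; cring.
      * apply CL_scal. 
        assert (Hj1 : 0 <= thk j < 1) by (apply H4; lia).
        assert (Hne : thk j <> th).
        { intros Heq. apply Hc0. apply (CL_unique (fun N => CF (Phi (pik k (sk k N))) (gL f (Lk k)) th)); auto.
          rewrite <- Heq. apply (CL_sub (fun N => CF (Phi (pik k N)) (gL f (Lk k)) (thk j))); auto. apply H3; lia. }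
        apply CL_zero_Cmod. apply FL_char. apply (F1_of Phi); auto. intros N; exists (pik (S k) N); auto.
        apply TS_sub; auto. lra. lra.
  - intros j Hj. destruct (Nat.eq_dec j k) as [->|Hjk]; auto. apply H4; lia.
Qed.

Lemma Inv_all k : Inv k.
Proof. induction k. split; [|split; [|split]]; auto; intros; lia. apply Inv_S; auto. Qed.


Definition pid N := pik N N.
Definition Psi N := Phi (pid N).

Lemma sk_SI k : StrictInc (sk k).
Proof. destruct (Inv_spec k (Inv_all k)) as [H _]; auto. Qed.
Lemma pik_SI k : StrictInc (pik k).
Proof. destruct (Inv_all k) as [H _]; auto. Qed.
Lemma thk_range k : 0 <= thk k < 1.
Proof. destruct (Inv_all (S k)) as [_ [_ [_ H]]]. apply H; lia. Qed.

Lemma pik_shift k j : forall n, exists m, (n <= m)%nat /\ pik (k + j) n = pik k m.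
Proof. induction j; intros n.
  - exists n. rewrite Nat.add_0_r. auto.
  - rewrite Nat.add_succ_r, pik_S. destruct (IHj (sk (k + j) n)) as [m [Hm E]]. exists m. split; auto.
    pose proof (si_ge _ (sk_SI (k + j)) n). lia. Qed.

Lemma TS_diag k : TS (fun N => Phi (pik k N)) Psi.
Proof. exists k. intros N HN. destruct (pik_shift k (N - k) N) as [m [Hm E]]. exists m; split; auto.
  unfold Psi, pid. replace (k + (N - k))%nat with N in E by lia. rewrite E. auto. Qed.

Lemma pid_SI : StrictInc pid.
Proof. intros N. unfold pid. rewrite pik_S. apply si_mono. apply pik_SI. pose proof (si_ge _ (sk_SI N) (S N)). lia. Qed.

Lemma F1_Psi : F1 Psi.
Proof. apply (F1_of Phi); auto. intros N; exists (pid N); auto.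
  apply (TS_trans _ (fun N => Phi (pik 0 N))). apply TS_sub. apply pik_SI. apply TS_diag. Qed.

Lemma D1 k : is_lim_seq (fun N => S2 (Psi N) (gL f (Lk k))) (Finite (ell k)).
Proof. apply (TS_lim (fun N => Phi (pik k N)) Psi (fun A => S2 A (gL f (Lk k)))). apply TS_diag. apply Inv_all. Qed.
Lemma D2 j k : (j < k)%nat -> CL (fun N => CF (Psi N) (gL f (Lk k)) (thk j)) (RtoC 0).
Proof. intros. apply (TS_CL (fun N => Phi (pik k N)) Psi (fun A => CF A (gL f (Lk k)) (thk j))). apply TS_diag.
  destruct (Inv_all k) as [_ [_ [H3 _]]]. auto. Qed.
Lemma D3 k th r : 0 <= th < 1 -> 0 < r -> freq (fun N => r <= Cmod (CF (Psi N) (gL f (Lk k)) th)) -> r <= 2 * Cmod (ck k).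
Proof. intros H1 H2 H3. destruct (Inv_spec k (Inv_all k)) as [_ [_ [_ Hm]]]. apply (Hm th r); auto.
  apply (TS_freq (fun N => Phi (pik k N)) Psi (fun A => r <= Cmod (CF A (gL f (Lk k)) th))); auto. apply TS_diag. Qed.

Lemma seg i j : (i <= j)%nat -> exists T, Lk j = T ++ Lk i /\ forall p, In p T -> exists m, (m < j)%nat /\ p = (ck m, - thk m).
Proof. intros Hij. induction j.
  - assert (i = 0%nat) by lia. subst. exists []. split; auto. intros p [].
  - destruct (Nat.eq_dec i (S j)). subst. exists []. split; auto. intros p [].
    destruct IHj as [T [E HT]]; [lia|]. exists ((ck j, - thk j) :: T). split. rewrite Lk_S, E. auto.
    intros p [<-|Hp]. exists j; split; auto. destruct (HT p Hp) as [m [Hm ->]]. exists m; split; auto. Qed.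

Lemma D4 i j : (i <= j)%nat -> is_lim_seq (fun N => S2 (Psi N) (fun n => tp (Lk j) n - tp (Lk i) n)%C) (Finite (ell i - ell j)).
Proof. intros Hij. destruct (seg i j Hij) as [T [E HT]].
  assert (Htp : forall n, (tp (Lk j) n - tp (Lk i) n)%C = tp T n) by (intros; rewrite E, tp_app; cring).
  assert (Hc : is_lim_seq (fun N => cross (Psi N) (gL f (Lk j)) (tp T)) 0).
  { apply cross_tp_lim. intros p Hp. destruct (HT p Hp) as [m [Hm ->]]. simpl. rewrite Ropp_involutive. apply D2; auto. }
  eapply is_lim_seq_ext.
  { intros N. symmetry. rewrite (S2_ext _ _ _ Htp).
    assert (S2 (Psi N) (gL f (Lk i)) = S2 (Psi N) (gL f (Lk j)) + 2 * cross (Psi N) (gL f (Lk j)) (tp T) + S2 (Psi N) (tp T)).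
    { rewrite <- S2_plus_exp. apply S2_ext. intros n. unfold gL. rewrite <- Htp. cring. }
    replace (S2 (Psi N) (tp T)) with (S2 (Psi N) (gL f (Lk i)) - S2 (Psi N) (gL f (Lk j)) - 2 * cross (Psi N) (gL f (Lk j)) (tp T)) by lra.
    reflexivity. }
  replace (ell i - ell j) with (ell i - ell j - 2 * 0) by ring.
  apply is_lim_seq_minus'. apply is_lim_seq_minus'; apply D1. apply lim_scal; auto. Qed.

Lemma ell_nonneg k : 0 <= ell k.
Proof. pose proof (is_lim_seq_le (fun _ => 0) _ 0 (ell k) (fun N => S2_nonneg (Psi N) (gL f (Lk k))) (is_lim_seq_const 0) (D1 k)).
  simpl in H; auto. Qed.
Lemma ell_dec i j : (i <= j)%nat -> ell j <= ell i.
Proof. intros H. induction j. assert (i = 0%nat) by lia; subst; lra.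
  destruct (Nat.eq_dec i (S j)). subst; lra. simpl. pose proof (n2_ge0 (ck j)). specialize (IHj ltac:(lia)). lra. Qed.

Lemma ell_inf : exists m, (forall k, m <= ell k) /\ forall eps, 0 < eps -> exists k, ell k < m + eps.
Proof. destruct (completeness (fun x => exists k, x = - ell k)) as [M [Hub Hlub]].
  - exists 0. intros x [k ->]. pose proof (ell_nonneg k). lra.
  - exists (- ell 0); exists 0%nat; auto.
  - exists (- M). split.
    + intros k. assert (- ell k <= M) by (apply Hub; exists k; auto). lra.
    + intros eps He. apply NNPP. intros H. assert (M <= M - eps). apply Hlub. intros x [k ->].
      destruct (Rlt_le_dec (ell k) (- M + eps)). exfalso; apply H; exists k; auto. lra. lra. Qed.

Definition Bk j := sumabs (Lk j).
Lemma Bk_mono i j : (i <= j)%nat -> Bk i <= Bk j.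
Proof. intros H. induction j. assert (i = 0%nat) by lia; subst; lra.
  destruct (Nat.eq_dec i (S j)). subst; lra. unfold Bk in *. rewrite Lk_S. simpl. pose proof (Cmod_ge_0 (ck j)). specialize (IHj ltac:(lia)). lra. Qed.
Lemma Bk_nonneg j : 0 <= Bk j.
Proof. apply sumabs_nonneg. Qed.

Definition goodN j T N := 4 * Bk j * Bk j * INR T <= INR (length (Psi N)) / (INR j + 1) /\
  forall i, (i <= j)%nat -> S2 (Psi N) (fun n => tp (Lk j) n - tp (Lk i) n)%C <= ell i - ell j + 1 / (INR j + 1).

Lemma ev_good j T : ev (goodN j T).
Proof. apply ev_and.
  - destruct (nat_above (4 * Bk j * Bk j * INR T * (INR j + 1))) as [M HM].
    destruct F1_Psi as [HN [Hne Hl]]. apply (ev_mono (fun N => (M <= length (Psi N))%nat)); [|apply FL_len; apply F1_Psi].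
    intros N HN'. apply le_INR in HN'. pose proof (pos_INR j).
    apply (Rmult_le_reg_r (INR j + 1)); [lra|]. replace (INR (length (Psi N)) / (INR j + 1) * (INR j + 1)) with (INR (length (Psi N))) by (field; lra). lra.
  - apply ev_forall_le. intros i Hi. pose proof (D4 i j Hi) as H. rewrite lim_ev in H.
    assert (0 < 1 / (INR j + 1)) by (pose proof (pos_INR j); apply Rdiv_lt_0_compat; lra).
    destruct (H _ H0) as [N HN]. exists N; intros n Hn. specialize (HN n Hn). apply Rlt_le, abs_le_both in HN. lra. Qed.

Lemma pickN_ex j T prev : exists N, (prev < N)%nat /\ goodN j T N.
Proof. destruct (ev_good j T) as [N HN]. exists (max N (S prev)). split. lia. apply HN; lia. Qed.
Definition pickN j T prev := proj1_sig (constructive_indefinite_description _ (pickN_ex j T prev)).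
Lemma pickN_spec j T prev : (prev < pickN j T prev)%nat /\ goodN j T (pickN j T prev).
Proof. unfold pickN. destruct (constructive_indefinite_description _ _); auto. Qed.

Definition maxl (A : list nat) := fold_right max 0%nat A.

Fixpoint gs (j : nat) : nat * nat :=
  match j with
  | O => (pickN 0 0 0, 0%nat)
  | S j => let NT := gs j in let T' := max (snd NT + 1) (S (maxl (Psi (fst NT)))) in (pickN (S j) T' (fst NT), T')
  end.
Definition Nj j := fst (gs j).
Definition Tj j := snd (gs j).

Lemma Tj_0 : Tj 0 = 0%nat.
Proof. reflexivity. Qed.
Lemma Tj_S j : Tj (S j) = max (Tj j + 1) (S (maxl (Psi (Nj j)))).
Proof. reflexivity. Qed.
Lemma Nj_good j : goodN j (Tj j) (Nj j).
Proof. destruct j; simpl; apply pickN_spec. Qed.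
Lemma Nj_SI : StrictInc Nj.
Proof. intros j. unfold Nj at 2. simpl. apply pickN_spec. Qed.
Lemma Tj_SI : StrictInc Tj.
Proof. intros j. rewrite Tj_S. lia. Qed.
Lemma Tj_bound j x : In x (Psi (Nj j)) -> (x < Tj (S j))%nat.
Proof. intros H. rewrite Tj_S. pose proof (max_ge _ _ H). unfold maxl. lia. Qed.

Lemma region n : exists j, (Tj j <= n < Tj (S j))%nat.
Proof. assert (H : forall d j, (n + 1 - j = d)%nat -> (Tj j <= n)%nat -> exists j', (Tj j' <= n < Tj (S j'))%nat).
  { induction d; intros j Hd Hj. pose proof (si_ge _ Tj_SI j). lia.
    destruct (le_lt_dec (Tj (S j)) n). apply (IHd (S j)); auto. pose proof (si_ge _ Tj_SI (S j)). lia.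
    exists j; lia. }
  apply (H _ 0%nat eq_refl). rewrite Tj_0. lia. Qed.
Definition rg n := proj1_sig (constructive_indefinite_description _ (region n)).
Lemma rg_spec n : (Tj (rg n) <= n < Tj (S (rg n)))%nat.
Proof. unfold rg. destruct (constructive_indefinite_description _ _); auto. Qed.
Lemma rg_eq n j : (Tj j <= n < Tj (S j))%nat -> rg n = j.
Proof. intros H. pose proof (rg_spec n). destruct (lt_eq_lt_dec (rg n) j) as [[Hl|He]|Hl]; auto.
  - pose proof (si_mono_le _ Tj_SI (S (rg n)) j ltac:(lia)). lia.
  - pose proof (si_mono_le _ Tj_SI (S j) (rg n) ltac:(lia)). lia. Qed.
Lemma rg_lt n j : (n < Tj j)%nat -> (rg n < j)%nat.
Proof. intros H. pose proof (rg_spec n). destruct (le_lt_dec j (rg n)); auto.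
  pose proof (si_mono_le _ Tj_SI j (rg n) l). lia. Qed.

Definition hB n := tp (Lk (rg n)) n.

Lemma rs_ind A T K : rs A (fun n => if (n <? T)%nat then K else 0) = K * INR (length (filter (fun n => (n <? T)%nat) A)).
Proof. unfold rs. induction A; simpl. ring. destruct (a <? T)%nat; simpl length; rewrite ?S_INR, IHA; ring. Qed.

Lemma count_lt A T : NoDup A -> (length (filter (fun n => (n <? T)%nat) A) <= T)%nat.
Proof. intros H. apply Nat.le_trans with (length (seq 0 T)); [|rewrite length_seq; lia]. apply NoDup_incl_length. apply NoDup_filter; auto.
  intros x Hx. apply filter_In in Hx. destruct Hx as [_ Hx]. apply Nat.ltb_lt in Hx. apply in_seq. lia. Qed.

Lemma glue_est i j : (i <= j)%nat ->
  S2 (Psi (Nj j)) (fun n => hB n - tp (Lk i) n)%C <= ell i - ell j + 2 / (INR j + 1).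
Proof. intros Hij. set (A := Psi (Nj j)). set (K := 4 * Bk j * Bk j). destruct (Nj_good j) as [G1 G2]. fold A in G1, G2.
  assert (HA : A <> []) by (unfold A, Psi; apply Phi_ne).
  assert (HND : NoDup A) by (destruct F1_Psi as [H _]; apply H).
  assert (Hl : 0 < INR (length A)) by (destruct A; [congruence|]; apply lt_0_INR; simpl; lia).
  pose proof (Bk_nonneg j) as HB0. pose proof (pos_INR j) as Hj.
  assert (Hpt : forall n, In n A -> n2 (hB n - tp (Lk i) n)%C <= n2 (tp (Lk j) n - tp (Lk i) n)%C + (if (n <? Tj j)%nat then K else 0)).
  { intros n Hn. destruct (Nat.ltb_spec n (Tj j)) as [Hlt|Hge].
    - pose proof (n2_ge0 (tp (Lk j) n - tp (Lk i) n)%C).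
      assert (n2 (hB n - tp (Lk i) n)%C <= K); [|lra].
      rewrite <- Cmod2. unfold K. pose proof (rg_lt n j Hlt).
      assert (Cmod (hB n - tp (Lk i) n)%C <= 2 * Bk j).
      { unfold Cminus. eapply Rle_trans; [apply Cmod_triangle|]. rewrite Cmod_opp.
        pose proof (tp_bound (Lk (rg n)) n). pose proof (tp_bound (Lk i) n).
        pose proof (Bk_mono (rg n) j ltac:(lia)). pose proof (Bk_mono i j Hij). unfold hB, Bk in *. lra. }
      pose proof (Cmod_ge_0 (hB n - tp (Lk i) n)%C). nra.
    - assert (rg n = j) by (apply rg_eq; split; auto; apply Tj_bound; auto). unfold hB. rewrite H. lra. }
  unfold S2. eapply Rle_trans. apply ravg_le. apply Hpt. rewrite ravg_plus. fold (S2 A (fun n => tp (Lk j) n - tp (Lk i) n)%C).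
  specialize (G2 i Hij).
  assert (ravg A (fun n => if (n <? Tj j)%nat then K else 0) <= 1 / (INR j + 1)).
  { rewrite ravg_rs, rs_ind. pose proof (count_lt A (Tj j) HND). apply le_INR in H.
    assert (0 <= K) by (unfold K; nra).
    apply Rle_trans with (K * INR (Tj j) / INR (length A)).
    { unfold Rdiv. apply Rmult_le_compat_r. left; apply Rinv_0_lt_compat; auto. apply Rmult_le_compat_l; auto. }
    apply (Rmult_le_reg_r (INR (length A))); auto. unfold Rdiv. rewrite Rmult_assoc, Rinv_l by lra.
    unfold Rdiv in G1. unfold K. replace (1 * / (INR j + 1) * INR (length A)) with (INR (length A) * / (INR j + 1)) by ring. lra. }
  replace (2 / (INR j + 1)) with (1 / (INR j + 1) + 1 / (INR j + 1)) by (field; lra). lra. Qed.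

Definition Psi2 j := Psi (Nj j).

Lemma TS_Psi2 : TS Psi Psi2.
Proof. exact (TS_sub Psi Nj Nj_SI). Qed.

Lemma glue_small i d : 0 < d -> ev (fun j => S2 (Psi2 j) (fun n => hB n - tp (Lk i) n)%C <= ell i - ell j + d).
Proof. intros Hd. destruct (inv_small (d / 2)) as [K HK]; [lra|]. exists (max K i). intros j Hj.
  eapply Rle_trans. apply glue_est; lia. specialize (HK j ltac:(lia)).
  assert (2 / (INR j + 1) = 2 * (1 / (INR j + 1))) by (unfold Rdiv; ring). lra. Qed.

Lemma glue_Bes : BesT Psi2 hB.
Proof. intros eps He. destruct ell_inf as [m [Hm Hinf]]. destruct (Hinf (eps / 2)) as [i Hi]; [lra|]. exists (Lk i).
  eapply ev_mono; [|apply (glue_small i (eps / 2))]. intros j Hj; simpl in *. pose proof (Hm j). lra. lra. Qed.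

Lemma glue_L2 : L2 Psi2 (fun n => f n - hB n)%C.
Proof. apply L2_ev. exists (4 * (ell 0 + 1)).
  pose proof (TS_lim _ _ (fun A => S2 A (gL f (Lk 0))) _ TS_Psi2 (D1 0)) as H. rewrite lim_ev in H.
  destruct (H 1 Rlt_0_1) as [N1 HN1]. destruct (glue_small 0 1 Rlt_0_1) as [N2 HN2].
  exists (max N1 N2). intros j Hj. specialize (HN1 j ltac:(lia)). specialize (HN2 j ltac:(lia)). simpl in *.
  apply Rlt_le, abs_le_both in HN1. pose proof (ell_nonneg j).
  eapply Rle_trans. apply (S2_tri _ _ _ (tp (Lk 0))).
  assert (S2 (Psi2 j) (fun n => tp (Lk 0) n - hB n)%C = S2 (Psi2 j) (fun n => hB n - tp (Lk 0) n)%C)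
    by (unfold S2; apply ravg_ext; intros; apply n2_sym).
  rewrite H1. unfold gL in HN1. lra. Qed.

Lemma glue_perp : PerpAll Psi2 (fun n => f n - hB n)%C.
Proof. intros th. eapply CL_ext; [intros N; symmetry; apply CF_frac|]. set (th0 := frac_part th).
  assert (Hth0 : 0 <= th0 < 1) by (unfold th0; pose proof (base_fp th); lra).
  apply CL_zero_Cmod. apply NNPP; intros Hn. rewrite lim_ev in Hn.
  assert (Hex : exists eps, 0 < eps /\ ~ ev (fun n => Rabs (Cmod (CF (Psi2 n) (fun n => f n - hB n)%C th0) - 0) < eps)).
  { apply NNPP; intros H. apply Hn. intros eps He. apply NNPP; intros H'. apply H. exists eps; auto. }
  destruct Hex as [eps [He Hne]]. apply not_ev_freq in Hne.
  set (d := eps * eps / 16). assert (Hd : 0 < d) by (unfold d; nra).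
  destruct ell_inf as [m [Hm Hinf]]. destruct (Hinf d Hd) as [i Hi].
  assert (Hc : n2 (ck i) < d) by (pose proof (Hm (S i)); simpl in H; lra).
  assert (Hfr : freq (fun j => eps / 2 <= Cmod (CF (Psi j) (gL f (Lk i)) th0))).
  { apply (TS_freq Psi Psi2 (fun A => eps / 2 <= Cmod (CF A (gL f (Lk i)) th0)) TS_Psi2).
    intros N. destruct (ev_freq _ _ (glue_small i d Hd) Hne N) as [j [Hj [H1 H2]]]. exists j; split; auto.
    rewrite Rminus_0_r, Rabs_pos_eq in H2 by apply Cmod_ge_0. apply Rnot_lt_le in H2.
    pose proof (Hm j).
    assert (HS : S2 (Psi2 j) (fun n => hB n - tp (Lk i) n)%C <= eps * eps / 4) by (unfold d in *; lra).
    assert (Hb : Cmod (CF (Psi2 j) (fun n => hB n - tp (Lk i) n)%C th0) <= eps / 2).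
    { eapply Rle_trans; [apply CF_Cmod|]. rewrite <- (sqrt_square (eps / 2)) by lra. apply sqrt_le_1_alt. lra. }
    assert (E : CF (Psi2 j) (fun n => f n - hB n)%C th0 = (CF (Psi2 j) (gL f (Lk i)) th0 + - CF (Psi2 j) (fun n => hB n - tp (Lk i) n)%C th0)%C).
    { rewrite <- (Cplus_opp_r (CF (Psi2 j) (fun n => hB n - tp (Lk i) n)%C th0)) || idtac.
      assert (E1 : CF (Psi2 j) (gL f (Lk i)) th0 = (CF (Psi2 j) (fun n => f n - hB n)%C th0 + CF (Psi2 j) (fun n => hB n - tp (Lk i) n)%C th0)%C).
      { rewrite <- CF_plus. unfold CF. apply cavg_ext; intros; unfold gL; cring. }
      rewrite E1. cring. }
    rewrite E in H2. pose proof (Cmod_triangle (CF (Psi2 j) (gL f (Lk i)) th0) (- CF (Psi2 j) (fun n => hB n - tp (Lk i) n)%C th0)).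
    rewrite Cmod_opp in H0. fold (Psi2 j). lra. }
  pose proof (D3 i th0 (eps / 2) Hth0 ltac:(lra) Hfr).
  assert (eps / 4 <= Cmod (ck i)) by lra. rewrite <- Cmod2 in Hc. unfold d in Hc. nra. Qed.

Lemma subseq_Psi2 : subseq_of Phi Psi2.
Proof. exists (fun j => pid (Nj j)). split; [|intros; reflexivity]. apply si_comp. apply pid_SI. apply Nj_SI. Qed.

End Main.

Lemma main_construction Phi f : Folner Phi -> L2 Phi f ->
  exists Psi' h, subseq_of Phi Psi' /\ BesT Psi' h /\ L2 Psi' (fun n => f n - h n)%C /\ PerpAll Psi' (fun n => f n - h n)%C.
Proof. intros HF HL. pose proof HL as HL'. apply L2_ev in HL. destruct HL as [M HM].
  destruct (extract_bounded (fun N => S2 (Phi N) f) M) as [s [l [Hs Hl]]].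
  { eapply ev_mono; [|apply HM]. intros n Hn; simpl in *. rewrite Rabs_pos_eq by apply S2_nonneg. auto. }
  assert (Hl' : is_lim_seq (fun N => S2 (Phi (s N)) (gL f [])) (Finite l)).
  { eapply is_lim_seq_ext; [|apply Hl]. intros N. simpl. apply S2_ext. intros n. unfold gL. rewrite tp_nil. cring. }
  exists (Psi2 Phi f HF s l Hs Hl'), (hB Phi f HF s l Hs Hl'). split; [|split; [|split]].
  apply subseq_Psi2; auto. apply glue_Bes; auto. apply glue_L2; auto. apply glue_perp; auto. Qed.

Lemma lim0_sqrt (v : nat -> R) : (forall n, 0 <= v n) -> is_lim_seq v 0 -> is_lim_seq (fun n => sqrt (v n)) 0.
Proof. intros H0 H. rewrite lim_ev in *. intros eps He. destruct (H (eps * eps)) as [N HN]. nra.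
  exists N; intros n Hn. specialize (HN n Hn). specialize (H0 n). rewrite Rminus_0_r, Rabs_pos_eq in * by (auto; apply sqrt_pos).
  rewrite <- (sqrt_square eps) by lra. apply sqrt_lt_1_alt. lra. Qed.

Lemma subseq_comp Phi Psi s : subseq_of Phi Psi -> StrictInc s -> subseq_of Phi (fun N => Psi (s N)).
Proof. intros [t [Ht E]] Hs. exists (fun N => t (s N)). split. apply si_comp; auto. intros; apply E. Qed.

Lemma perp_fix Psi f h u : L2 Psi (fun n => f n - h n)%C -> PerpAll Psi (fun n => f n - h n)%C ->
  is_lim_seq (fun N => S2 (Psi N) u) 0 -> (forall n, u n = (h n - f n + (f n - h n)%C + u n)%C) ->
  L2 Psi (fun n => f n - h n + u n)%C /\ PerpAll Psi (fun n => f n - h n + u n)%C.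
Proof. intros HL HP Hu _. split.
  - apply L2_ev. apply L2_ev in HL. destruct HL as [M HM]. exists (2 * M + 2 * 1).
    rewrite lim_ev in Hu. destruct (Hu 1 Rlt_0_1) as [N HN]. eapply ev_mono; [|apply (ev_and _ _ HM (ex_intro _ N HN))].
    intros n [H1 H2]. simpl in *. rewrite Rminus_0_r in H2. apply Rlt_le, abs_le_both in H2.
    eapply Rle_trans. unfold S2. apply ravg_le. intros; apply n2_plus_le. rewrite ravg_plus, !ravg_scal. fold (S2 (Psi n) (fun n => f n - h n)%C) (S2 (Psi n) u). lra.
  - intros th. eapply CL_ext. intros N. symmetry. apply CF_plus. replace (RtoC 0) with (RtoC 0 + RtoC 0)%C by cring.
    apply CL_plus; auto. apply CL_zero_Cmod. apply (lim0_le _ (fun N => sqrt (S2 (Psi N) u))).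
    intros; apply Cmod_ge_0. exists 0%nat; intros; apply CF_Cmod. apply lim0_sqrt; auto. intros; apply S2_nonneg. Qed.

Theorem theorem3p6 (Phi : nat -> list nat) (f : nat -> C) :
  Folner Phi -> L2 Phi f ->
  exists (Psi : nat -> list nat) (fBes fanti : nat -> C),
    subseq_of Phi Psi /\
    Bes Psi fBes /\ Bes_perp Psi fanti /\
    (forall n, f n = Cplus (fBes n) (fanti n)) /\
    Phinorm Psi (fun n => Cminus (f n) (fBes n)) =
      Glb_Rbar (fun r => exists g, Bes Psi g /\
                  Phinorm Psi (fun n => Cminus (f n) (g n)) = Finite r) /\
    (forall a b : R,
       (forall n, Im (f n) = 0 /\ a <= Re (f n) <= b) ->
       (forall n, Im (fBes n) = 0 /\ a <= Re (fBes n) <= b)).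
Proof.
  intros HF HL. destruct (main_construction Phi f HF HL) as [Psi1 [h [Hsub [HB [HL1 HP]]]]].
  assert (Hfb : exists fB, BesT Psi1 fB /\ L2 Psi1 (fun n => f n - fB n)%C /\ PerpAll Psi1 (fun n => f n - fB n)%C /\
     (forall a b : R, (forall n, Im (f n) = 0 /\ a <= Re (f n) <= b) -> (forall n, Im (fB n) = 0 /\ a <= Re (fB n) <= b))).
  { destruct (classic (exists a b, forall n, Im (f n) = 0 /\ a <= Re (f n) <= b)) as [[a0 [b0 Hab]]|Hno].
    - destruct (completeness (fun x => exists n, x = Re (f n))) as [bs [Hbu Hbl]].
      { exists b0. intros x [n ->]. apply Hab. } { exists (Re (f 0%nat)), 0%nat; auto. }
      destruct (completeness (fun x => exists n, x = - Re (f n))) as [ms [Hmu Hml]].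
      { exists (- a0). intros x [n ->]. destruct (Hab n) as [_ H]. lra. } { exists (- Re (f 0%nat)), 0%nat; auto. }
      set (as_ := - ms).
      assert (Hin : forall n, as_ <= Re (f n) <= bs).
      { intros n. split. assert (- Re (f n) <= ms) by (apply Hmu; exists n; auto). unfold as_; lra. apply Hbu; exists n; auto. }
      assert (Hsb : forall a b, (forall n, Im (f n) = 0 /\ a <= Re (f n) <= b) -> a <= as_ /\ bs <= b).
      { intros a b H. split.
        - assert (ms <= - a). { apply Hml. intros x [n ->]. destruct (H n) as [_ Hn]. lra. } unfold as_; lra.
        - apply Hbl. intros x [n ->]. apply H. }
      assert (Hle : as_ <= bs) by (pose proof (Hin 0%nat); lra).
      assert (Hf : forall n, snd (f n) = 0 /\ as_ <= fst (f n) <= bs) by (intros n; split; [apply Hab|apply Hin]).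
      pose proof (clip_correction Psi1 f h as_ bs Hle Hf HB HL1 HP) as Hu.
      exists (fun n => cclip as_ bs (h n)). split; [apply BesT_clip; auto|].
      destruct (perp_fix Psi1 f h (fun n => h n - cclip as_ bs (h n))%C HL1 HP Hu) as [HL2 HP2]. intros; cring.
      split; [|split].
      + apply L2_ev. apply L2_ev in HL2. destruct HL2 as [M HM]. exists M. eapply ev_mono; [|apply HM]. intros N HN; simpl in *.
        rewrite <- HN. right. apply S2_ext. intros; cring.
      + intros th. eapply CL_ext; [|apply (HP2 th)]. intros N. unfold CF. apply cavg_ext. intros; cring.
      + intros a b H n. destruct (Hsb a b H). unfold cclip, RtoC; simpl. split; auto. pose proof (clip_range as_ bs (fst (h n)) Hle). lra.
    - exists h. split; auto. split; auto. split; auto. intros a b H. exfalso. apply Hno. exists a, b; auto. }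
  destruct Hfb as [fB [HB' [HL' [HP' Hint]]]].
  pose proof HL' as HL''. apply L2_ev in HL''. destruct HL'' as [M HM].
  destruct (extract_bounded (fun N => S2 (Psi1 N) (fun n => f n - fB n)%C) M) as [s [lam [Hs Hlam]]].
  { eapply ev_mono; [|apply HM]. intros n Hn; simpl in *. rewrite Rabs_pos_eq by apply S2_nonneg. auto. }
  assert (HT : TS Psi1 (fun N => Psi1 (s N))) by (apply TS_sub; auto).
  exists (fun N => Psi1 (s N)), fB, (fun n => f n - fB n)%C.
  split; [apply subseq_comp; auto|]. split; [apply BesT_Bes; apply (BesT_TS Psi1); auto|].
  split; [apply PerpAll_Bes_perp; [apply (L2_TS Psi1); auto|apply (PerpAll_TS Psi1); auto]|].
  split; [intros; cring|]. split; [|auto].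
  apply (Glb_lemma _ f fB lam); auto. apply (BesT_TS Psi1); auto. apply (L2_TS Psi1); auto. apply (PerpAll_TS Psi1); auto.
Qed.
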